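(* Let $n>k\ge1$ be coprime integers, $\eta$ in the upper half-plane, $\Lambda=\mathbb{Z}+\mathbb{Z}\eta$. For every $m\in\mathbb{Z}$, $\lim_{\tau\to0}R_\tau(m\tau)=\mathrm{sym}_m$, where $\mathrm{sym}_m\in\mathrm{End}(V\otimes V)$ is defined by $\mathrm{sym}_m(v\otimes v')=v\otimes v'-m\,v'\otimes v$ (the limit taken over $\tau\in\mathbb{C}\setminus\frac1n\Lambda$ tending to $0$).
   Context: Write $e(z)=e^{2\pi i z}$ and $\theta(z)=\sum_{m\in\mathbb{Z}}(-1)^m e\big(mz+\tfrac12 m(m-1)\eta\big)$. For $\alpha\in\mathbb{Z}$ put $\theta_\alpha(z)=e\big(\alpha z+\tfrac{\alpha}{2n}+\tfrac{\alpha(\alpha-n)}{2n}\eta\big)\prod_{m=0}^{n-1}\theta\big(z+\tfrac mn+\tfrac{\alpha}{n}\eta\big)$, regarded as indexed by $\alpha\in\mathbb{Z}_n$. Let $V$ be an $n$-dimensional complex vector space with basis $x_i$, $i\in\mathbb{Z}_n$. For $\tau\in\mathbb{C}\setminus\frac1n\Lambda$ and $z\in\mathbb{C}$, define $R_\tau(z)\in\mathrm{End}(V\otimes V)$ by $$R_\tau(z)(x_i\otimes x_j)=\frac{\theta_0(-z)\cdots\theta_{n-1}(-z)}{\theta_1(0)\cdots\theta_{n-1}(0)}\sum_{r\in\mathbb{Z}_n}\frac{\theta_{j-i+r(k-1)}(-z+\tau)}{\theta_{j-i-r}(-z)\,\theta_{kr}(\tau)}\,x_{j-r}\otimes x_{i+r}.$$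 *)

(* Defs.v *)
From Stdlib Require Import Reals ZArith List.
From Coquelicot Require Export Coquelicot.
Import ListNotations.
Open Scope R_scope.

Definition Cseries (a : nat -> C) : C :=
  (Series (fun p => Re (a p)), Series (fun p => Im (a p))).

Definition Zrange (N : Z) : list Z := map Z.of_nat (seq 0 (Z.to_nat N)).
Definition Csum (l : list Z) (f : Z -> C) : C :=
  fold_right (fun x acc => Cplus (f x) acc) (RtoC 0) l.
Definition Cprod (l : list Z) (f : Z -> C) : C :=
  fold_right (fun x acc => Cmult (f x) acc) (RtoC 1) l.

(* e(z) = exp(2 pi i z) *)
Definition ee (z : C) : C :=
  Cmult (RtoC (exp (- (2 * PI * Im z))))
        (cos (2 * PI * Re z), sin (2 * PI * Re z)).

Definition sgnZ (m : Z) : C := if Z.even m then RtoC 1 else RtoC (-1).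

(* theta(z) = sum_{m in Z} (-1)^m e(m z + m(m-1)/2 eta),
   split as the sum over m >= 0 plus the sum over m <= -1. *)
Definition theta_term (eta z : C) (m : Z) : C :=
  Cmult (sgnZ m)
        (ee (Cplus (Cmult (RtoC (IZR m)) z)
                   (Cmult (RtoC (IZR (m * (m - 1)) / 2)) eta))).

Definition theta (eta z : C) : C :=
  Cplus (Cseries (fun p => theta_term eta z (Z.of_nat p)))
        (Cseries (fun p => theta_term eta z (- Z.of_nat (S p)))%Z).

Definition theta_alpha (n : Z) (eta : C) (alpha : Z) (z : C) : C :=
  Cmult
    (ee (Cplus (Cplus (Cmult (RtoC (IZR alpha)) z)
                      (RtoC (IZR alpha / (2 * IZR n))))
               (Cmult (RtoC (IZR (alpha * (alpha - n)) / (2 * IZR n))) eta)))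
    (Cprod (Zrange n) (fun m =>
       theta eta (Cplus (Cplus z (RtoC (IZR m / IZR n)))
                        (Cmult (RtoC (IZR alpha / IZR n)) eta)))).

(* theta_alpha indexed by alpha in Z_n: we use the representative in {0..n-1}. *)
Definition thetaZn (n : Z) (eta : C) (alpha : Z) (z : C) : C :=
  theta_alpha n eta (alpha mod n)%Z z.

Definition eqmod (n x y : Z) : bool := Z.eqb (x mod n)%Z (y mod n)%Z.

Definition ind (b : bool) : C := if b then RtoC 1 else RtoC 0.

(* Scalar coefficient c_r(z) in R_tau(z)(x_i (x) x_j) = sum_r c_r(z) x_{j-r} (x) x_{i+r}.
   The factor theta_0(-z)...theta_{n-1}(-z) / theta_{j-i-r}(-z) is written with the
   factor theta_{j-i-r}(-z) cancelled (product over beta <> j-i-r mod n). *)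
Definition Rcoeff (n k : Z) (eta tau z : C) (i j r : Z) : C :=
  Cmult
    (Cdiv (Cprod (filter (fun beta => negb (eqmod n beta (j - i - r)%Z)) (Zrange n))
                 (fun beta => thetaZn n eta beta (Copp z)))
          (Cprod (map Z.succ (Zrange (n - 1))) (fun beta => thetaZn n eta beta (RtoC 0))))
    (Cdiv (thetaZn n eta (j - i + r * (k - 1))%Z (Cplus (Copp z) tau))
          (thetaZn n eta (k * r)%Z tau)).

(* Matrix entry of R_tau(z) in the basis x_a (x) x_b of V (x) V:
   coefficient of x_a (x) x_b in R_tau(z)(x_i (x) x_j). Indices are taken mod n. *)
Definition Rmat (n k : Z) (eta tau z : C) (i j a b : Z) : C :=
  Csum (Zrange n) (fun r =>
    Cmult (Rcoeff n k eta tau z i j r)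
          (ind (eqmod n a (j - r)%Z && eqmod n b (i + r)%Z))).

Definition symmat (n m : Z) (i j a b : Z) : C :=
  Cminus (ind (eqmod n a i && eqmod n b j))
         (Cmult (RtoC (IZR m)) (ind (eqmod n a j && eqmod n b i))).

Definition in_lattice_n (n : Z) (eta tau : C) : Prop :=
  exists p q : Z,
    tau = Cmult (RtoC (/ IZR n)) (Cplus (RtoC (IZR p)) (Cmult (RtoC (IZR q)) eta)).

(* Main.v *)
Require Import Defs.
From Stdlib Require Import Reals ZArith List Lia Lra.
From Coquelicot Require Import Coquelicot.
Open Scope R_scope.

Lemma Cpair_eq (a b c d : R) : a = c -> b = d -> (a, b) = (c, d) :> C.
Proof. intros; subst; reflexivity. Qed.

Lemma Cmod_pair_cos_sin t : Cmod (cos t, sin t) = 1.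
Proof. unfold Cmod; simpl. pose proof (sin2_cos2 t). unfold Rsqr in H.
  replace (cos t * (cos t * 1) + sin t * (sin t * 1)) with 1 by lra. apply sqrt_1. Qed.

Lemma Cmod_ee z : Cmod (ee z) = exp (- (2 * PI * Im z)).
Proof.
  unfold ee. rewrite Cmod_mult, Cmod_pair_cos_sin, Cmod_R.
  rewrite Rabs_pos_eq; [lra|]. apply Rlt_le, exp_pos.
Qed.

Lemma ee_nz z : ee z <> 0%C.
Proof. intro H. pose proof (Cmod_ee z). rewrite H, Cmod_0 in H0. pose proof (exp_pos (- (2 * PI * Im z))). lra. Qed.

Lemma ee_add u v : ee (Cplus u v) = Cmult (ee u) (ee v).
Proof.
  destruct u as [a b], v as [c d]. unfold ee; simpl.
  replace (- (2 * PI * (b + d))) with ((- (2*PI*b)) + (- (2*PI*d))) by ring.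
  replace (2 * PI * (a + c)) with (2*PI*a + 2*PI*c) by ring.
  rewrite exp_plus, cos_plus, sin_plus.
  unfold Cmult, RtoC; simpl. apply Cpair_eq; ring.
Qed.

Lemma ee_0 : ee (RtoC 0) = RtoC 1.
Proof. unfold ee; simpl. replace (- (2 * PI * 0)) with 0 by ring. replace (2*PI*0) with 0 by ring.
  rewrite exp_0, cos_0, sin_0. unfold Cmult, RtoC; simpl. apply Cpair_eq; ring. Qed.

Lemma ee_opp_mul u : Cmult (ee (Copp u)) (ee u) = RtoC 1.
Proof. rewrite <- ee_add. replace (Cplus (Copp u) u) with (RtoC 0). apply ee_0.
  destruct u; unfold Cplus, Copp, RtoC; simpl; apply Cpair_eq; ring. Qed.

Lemma Cmod_le_sum (z : C) : Cmod z <= Rabs (Re z) + Rabs (Im z).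
Proof.
  destruct z as [a b]; unfold Cmod; simpl.
  rewrite <- (sqrt_square (Rabs a + Rabs b)).
  2:{ pose proof (Rabs_pos a); pose proof (Rabs_pos b); lra. }
  apply sqrt_le_1.
  - nra.
  - pose proof (Rabs_pos a); pose proof (Rabs_pos b); nra.
  - pose proof (Rabs_pos a); pose proof (Rabs_pos b).
    assert (a*a = Rabs a * Rabs a) by (rewrite <- Rabs_mult; rewrite Rabs_pos_eq; nra).
    assert (b*b = Rabs b * Rabs b) by (rewrite <- Rabs_mult; rewrite Rabs_pos_eq; nra).
    nra.
Qed.

Lemma Im_le_Cmod (z : C) : Rabs (Im z) <= Cmod z.
Proof. pose proof (Rmax_Cmod z). destruct z; simpl in *. pose proof (Rmax_r (Rabs r) (Rabs r0)). lra. Qed.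

Lemma Re_le_Cmod (z : C) : Rabs (Re z) <= Cmod z.
Proof. apply re_le_Cmod. Qed.

Definition Clim {X} (F : (X -> Prop) -> Prop) (f : X -> C) (L : C) :=
  forall eps, 0 < eps -> F (fun y => Cmod (Cminus (f y) L) < eps).
Definition Rlim {X} (F : (X -> Prop) -> Prop) (f : X -> R) (L : R) :=
  forall eps, 0 < eps -> F (fun y => Rabs (f y - L) < eps).

Definition nbC (z0 : C) (P : C -> Prop) := exists d, 0 < d /\ forall z, Cmod (Cminus z z0) < d -> P z.

Global Instance nbC_filter z0 : Filter (nbC z0).
Proof.
  constructor.
  - exists 1; split; [lra| auto].
  - intros P Q [d1 [H1 P1]] [d2 [H2 P2]]. exists (Rmin d1 d2); split.
    + apply Rmin_pos; auto.
    + intros z Hz; split; [apply P1|apply P2]; eapply Rlt_le_trans; eauto; [apply Rmin_l|apply Rmin_r].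
  - intros P Q HPQ [d [Hd HP]]. exists d; split; auto.
Qed.

Definition contC (f : C -> C) (z0 : C) := Clim (nbC z0) f (f z0).

Section Lims.
Context {X : Type} (F : (X -> Prop) -> Prop) {FF : Filter F}.

Lemma Clim_const c : Clim F (fun _ => c) c.
Proof. intros e He. apply filter_forall. intros. replace (Cminus c c) with (RtoC 0) by ring. rewrite Cmod_0; auto. Qed.

Lemma Clim_ext_ev f g L : F (fun y => f y = g y) -> Clim F f L -> Clim F g L.
Proof. intros H1 H2 e He. generalize (@filter_and _ F FF _ _ H1 (H2 e He)). apply filter_imp. intros y [-> H]; auto. Qed.

Lemma Clim_ext f g L : (forall y, f y = g y) -> Clim F f L -> Clim F g L.
Proof. intros H. apply Clim_ext_ev, filter_forall; auto. Qed.

Lemma Clim_plus f g L M : Clim F f L -> Clim F g M -> Clim F (fun y => Cplus (f y) (g y)) (Cplus L M).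
Proof.
  intros H1 H2 e He. generalize (@filter_and _ F FF _ _ (H1 (e/2) ltac:(lra)) (H2 (e/2) ltac:(lra))).
  apply filter_imp. intros y [A B].
  replace (Cminus (Cplus (f y) (g y)) (Cplus L M)) with (Cplus (Cminus (f y) L) (Cminus (g y) M)) by ring.
  eapply Rle_lt_trans; [apply Cmod_triangle|]. lra.
Qed.

Lemma Clim_opp f L : Clim F f L -> Clim F (fun y => Copp (f y)) (Copp L).
Proof.
  intros H e He. generalize (H e He). apply filter_imp. intros y A.
  replace (Cminus (Copp (f y)) (Copp L)) with (Copp (Cminus (f y) L)) by ring. rewrite Cmod_opp; auto.
Qed.

Lemma Clim_minus f g L M : Clim F f L -> Clim F g M -> Clim F (fun y => Cminus (f y) (g y)) (Cminus L M).
Proof. intros. apply Clim_plus; auto. apply Clim_opp; auto. Qed.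

Lemma Clim_mult f g L M : Clim F f L -> Clim F g M -> Clim F (fun y => Cmult (f y) (g y)) (Cmult L M).
Proof.
  intros H1 H2 e He.
  set (K := Cmod L + Cmod M + 2).
  assert (HK : 0 < K) by (unfold K; pose proof (Cmod_ge_0 L); pose proof (Cmod_ge_0 M); lra).
  set (e' := Rmin 1 (e / K)).
  assert (He' : 0 < e') by (apply Rmin_pos; [lra| apply Rdiv_lt_0_compat; auto]).
  generalize (@filter_and _ F FF _ _ (H1 e' He') (H2 e' He')).
  apply filter_imp. intros y [A B].
  replace (Cminus (Cmult (f y) (g y)) (Cmult L M)) with
      (Cplus (Cmult (Cminus (f y) L) (g y)) (Cmult L (Cminus (g y) M))) by ring.
  eapply Rle_lt_trans; [apply Cmod_triangle|]. rewrite !Cmod_mult.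
  assert (Hg : Cmod (g y) <= Cmod M + 1).
  { replace (g y) with (Cplus (Cminus (g y) M) M) by ring.
    eapply Rle_trans; [apply Cmod_triangle|]. pose proof (Rmin_l 1 (e/K)). fold e' in H. lra. }
  pose proof (Rmin_r 1 (e/K)). fold e' in H.
  pose proof (Cmod_ge_0 (Cminus (f y) L)). pose proof (Cmod_ge_0 L). pose proof (Cmod_ge_0 (g y)).
  pose proof (Cmod_ge_0 (Cminus (g y) M)).
  apply Rle_lt_trans with (e' * (Cmod M + 1) + Cmod L * e').
  - apply Rplus_le_compat; [apply Rmult_le_compat; lra| apply Rmult_le_compat_l; lra].
  - replace (e' * (Cmod M + 1) + Cmod L * e') with (e' * (K - 1)) by (unfold K; ring).
    assert (e' * K <= e) by (apply Rle_trans with (e / K * K); [apply Rmult_le_compat_r; lra| field_simplify; lra]).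
    nra.
Qed.

Lemma Clim_inv g M : M <> RtoC 0 -> Clim F g M -> Clim F (fun y => Cinv (g y)) (Cinv M).
Proof.
  intros HM H e He.
  assert (Hm : 0 < Cmod M) by (apply Cmod_gt_0; auto).
  set (e' := Rmin (Cmod M / 2) (e * Cmod M * Cmod M / 2)).
  assert (He' : 0 < e') by (apply Rmin_pos; [lra| apply Rdiv_lt_0_compat; [repeat apply Rmult_lt_0_compat|]; lra]).
  generalize (H e' He'). apply filter_imp. intros y A.
  pose proof (Rmin_l (Cmod M / 2) (e * Cmod M * Cmod M / 2)) as B1.
  pose proof (Rmin_r (Cmod M / 2) (e * Cmod M * Cmod M / 2)) as B2. fold e' in B1, B2.
  assert (Hg : Cmod M / 2 <= Cmod (g y)).
  { assert (Cmod M <= Cmod (g y) + Cmod (Cminus M (g y))).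
    { replace M with (Cplus (g y) (Cminus M (g y))) at 1 by ring. apply Cmod_triangle. }
    replace (Cminus M (g y)) with (Copp (Cminus (g y) M)) in H0 by ring. rewrite Cmod_opp in H0. lra. }
  assert (Hgn : g y <> RtoC 0). { intro E. rewrite E, Cmod_0 in Hg. lra. }
  replace (Cminus (Cinv (g y)) (Cinv M)) with (Cdiv (Copp (Cminus (g y) M)) (Cmult (g y) M)) by (field; auto).
  rewrite Cmod_div by (apply Cmult_neq_0; auto). rewrite Cmod_opp, Cmod_mult.
  apply Rlt_le_trans with (e' / (Cmod M / 2 * Cmod M)).
  - unfold Rdiv. apply Rle_lt_trans with (Cmod (Cminus (g y) M) * / (Cmod M / 2 * Cmod M)).
    + apply Rmult_le_compat_l; [apply Cmod_ge_0|]. apply Rinv_le_contravar.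
      * apply Rmult_lt_0_compat; lra.
      * apply Rmult_le_compat_r; lra.
    + apply Rmult_lt_compat_r; [apply Rinv_0_lt_compat, Rmult_lt_0_compat; lra| auto].
  - apply Rle_trans with ((e * Cmod M * Cmod M / 2) / (Cmod M / 2 * Cmod M)).
    + unfold Rdiv. apply Rmult_le_compat_r; [|lra]. left; apply Rinv_0_lt_compat, Rmult_lt_0_compat; lra.
    + right. field. lra.
Qed.

Lemma Clim_div f g L M : M <> RtoC 0 -> Clim F f L -> Clim F g M -> Clim F (fun y => Cdiv (f y) (g y)) (Cdiv L M).
Proof. intros. unfold Cdiv. apply Clim_mult; auto. apply Clim_inv; auto. Qed.

Lemma Clim_comp (g : X -> C) (f : C -> C) z0 : Clim F g z0 -> contC f z0 -> Clim F (fun y => f (g y)) (f z0).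
Proof.
  intros Hg Hf e He. destruct (Hf e He) as [d [Hd Hfd]].
  generalize (Hg d Hd). apply filter_imp. intros y A. apply Hfd; auto.
Qed.

Lemma Rlim_Clim (f : X -> C) L : Rlim F (fun y => Re (f y)) (Re L) -> Rlim F (fun y => Im (f y)) (Im L) -> Clim F f L.
Proof.
  intros H1 H2 e He. generalize (@filter_and _ F FF _ _ (H1 (e/2) ltac:(lra)) (H2 (e/2) ltac:(lra))).
  apply filter_imp. intros y [A B].
  eapply Rle_lt_trans; [apply Cmod_le_sum|].
  destruct (f y) as [a b], L as [c d]; unfold Cminus, Cplus, Copp; simpl in *.
  replace (a + - c) with (a - c) by ring. replace (b + - d) with (b - d) by ring. lra.
Qed.

End Lims.

Lemma contC_id z0 : contC (fun z => z) z0.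
Proof. intros e He. exists e; split; auto. Qed.

Lemma ex_series_dom (a b : nat -> R) : (forall n, Rabs (a n) <= b n) -> ex_series b -> ex_series a.
Proof. intros H Hb. apply (ex_series_le a b); auto. Qed.

Lemma Series_abs_le (a b : nat -> R) : (forall n, Rabs (a n) <= b n) -> ex_series b -> Rabs (Series a) <= Series b.
Proof.
  intros H Hb. assert (Ha : ex_series (fun n => Rabs (a n))).
  { apply (ex_series_dom _ b); auto. intro n; rewrite Rabs_Rabsolu; auto. }
  eapply Rle_trans; [apply Series_Rabs; auto|]. apply Series_le; auto.
  intro n; split; [apply Rabs_pos| auto].
Qed.

Lemma tail_small (g : nat -> R) : ex_series g -> forall e, 0 < e ->
  exists N, Rabs (Series (fun k => g (S N + k)%nat)) < e.
Proof.
  intros Hg e He. pose proof (Series_correct _ Hg) as H. apply is_series_Reals in H.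
  destruct (H e He) as [N HN]. exists N.
  rewrite (Series_incr_n g (S N)) in HN by (lia || auto).
  specialize (HN N (le_n _)). unfold Rdist in HN. simpl pred in HN.
  replace (sum_f_R0 g N - (sum_f_R0 g N + Series (fun k => g (S N + k)%nat))) with
    (- Series (fun k => g (S N + k)%nat)) in HN by ring.
  rewrite Rabs_Ropp in HN; auto.
Qed.

Section Tannery.
Context {X : Type} (F : (X -> Prop) -> Prop) {FF : Filter F}.

Lemma fin_sum_lim (f : X -> nat -> R) (h : nat -> R) :
  (forall p, Rlim F (fun y => f y p) (h p)) ->
  forall e, 0 < e -> forall N, F (fun y => sum_f_R0 (fun k => Rabs (f y k - h k)) N < (INR N + 1) * e).
Proof.
  intros Hl e He N. induction N.
  - generalize (Hl 0%nat e He). apply filter_imp. intros y A. simpl. lra.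
  - generalize (@filter_and _ F FF _ _ IHN (Hl (S N) e He)). apply filter_imp. intros y [A B].
    simpl sum_f_R0. rewrite S_INR. lra.
Qed.

Lemma tannery_R (f : X -> nat -> R) (h g : nat -> R) :
  ex_series g ->
  (forall p, Rlim F (fun y => f y p) (h p)) ->
  (forall p, Rabs (h p) <= g p) ->
  F (fun y => forall p, Rabs (f y p) <= g p) ->
  Rlim F (fun y => Series (f y)) (Series h).
Proof.
  intros Hg Hl Hh Hb e He.
  destruct (tail_small g Hg (e/4) ltac:(lra)) as [N HN].
  assert (He' : 0 < e / (4 * (INR N + 1))).
  { apply Rdiv_lt_0_compat; [lra|]. pose proof (pos_INR N); lra. }
  generalize (@filter_and _ F FF _ _ Hb (fin_sum_lim f h Hl _ He' N)).
  apply filter_imp. intros y [B HS].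
  assert (Hgt : ex_series (fun k => g (S N + k)%nat)) by (apply ex_series_incr_n; auto).
  assert (Hfy : ex_series (f y)) by (apply (ex_series_dom _ g); auto).
  assert (Hhs : ex_series h) by (apply (ex_series_dom _ g); auto).
  rewrite (Series_incr_n (f y) (S N)) by (lia || auto).
  rewrite (Series_incr_n h (S N)) by (lia || auto). simpl pred.
  assert (T1 : Rabs (Series (fun k => f y (S N + k)%nat)) <= Series (fun k => g (S N + k)%nat))
    by (apply Series_abs_le; auto).
  assert (T2 : Rabs (Series (fun k => h (S N + k)%nat)) <= Series (fun k => g (S N + k)%nat))
    by (apply Series_abs_le; auto).
  assert (T3 : Rabs (sum_f_R0 (f y) N - sum_f_R0 h N) <= sum_f_R0 (fun k => Rabs (f y k - h k)) N).
  { rewrite <- minus_sum. apply sum_f_R0_triangle. }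
  assert (E : (INR N + 1) * (e / (4 * (INR N + 1))) = e / 4) by (field; pose proof (pos_INR N); lra).
  rewrite E in HS.
  pose proof (Rle_abs (Series (fun k => g (S N + k)%nat))).
  replace (sum_f_R0 (f y) N + Series (fun k => f y (S N + k)%nat) -
           (sum_f_R0 h N + Series (fun k => h (S N + k)%nat)))
    with ((sum_f_R0 (f y) N - sum_f_R0 h N) + Series (fun k => f y (S N + k)%nat) - Series (fun k => h (S N + k)%nat)) by ring.
  eapply Rle_lt_trans; [apply Rabs_triang|]. rewrite Rabs_Ropp.
  eapply Rle_lt_trans; [apply Rplus_le_compat_r, Rabs_triang|]. lra.
Qed.

Lemma tannery_C (f : X -> nat -> C) (h : nat -> C) (g : nat -> R) :
  ex_series g ->
  (forall p, Clim F (fun y => f y p) (h p)) ->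
  (forall p, Cmod (h p) <= g p) ->
  F (fun y => forall p, Cmod (f y p) <= g p) ->
  Clim F (fun y => Cseries (f y)) (Cseries h).
Proof.
  intros Hg Hl Hh Hb. apply Rlim_Clim; auto; unfold Cseries; simpl.
  - apply tannery_R with g; auto.
    + intros p e He. generalize (Hl p e He). apply filter_imp. intros y A.
      eapply Rle_lt_trans; [|apply A].
      replace (Re (f y p) - Re (h p)) with (Re (Cminus (f y p) (h p))) by (destruct (f y p), (h p); unfold Cminus, Cplus, Copp; simpl; ring). apply Re_le_Cmod.
    + intros p. eapply Rle_trans; [apply Re_le_Cmod| auto].
    + generalize Hb. apply filter_imp. intros y A p. eapply Rle_trans; [apply Re_le_Cmod| auto].
  - apply tannery_R with g; auto.
    + intros p e He. generalize (Hl p e He). apply filter_imp. intros y A.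
      eapply Rle_lt_trans; [|apply A].
      replace (Im (f y p) - Im (h p)) with (Im (Cminus (f y p) (h p))) by (destruct (f y p), (h p); unfold Cminus, Cplus, Copp; simpl; ring). apply Im_le_Cmod.
    + intros p. eapply Rle_trans; [apply Im_le_Cmod| auto].
    + generalize Hb. apply filter_imp. intros y A p. eapply Rle_trans; [apply Im_le_Cmod| auto].
Qed.

End Tannery.

Lemma Rcont_eps f x : continuity_pt f x -> forall e, 0 < e -> exists d, 0 < d /\ forall y, Rabs (y - x) < d -> Rabs (f y - f x) < e.
Proof.
  intros H e He. destruct (H e He) as [d [Hd Hy]]. exists d; split; auto.
  intros y Hyd. destruct (Req_dec y x) as [->|Hne].
  - replace (f x - f x) with 0 by ring. rewrite Rabs_R0; auto.
  - apply (Hy y). split; [split; [exact I| auto]| auto].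
Qed.

Lemma cont_exp x : continuity_pt exp x.
Proof. apply derivable_continuous_pt, derivable_pt_exp. Qed.

Lemma Rcont_scaled f c : continuity_pt f 0 -> forall e, 0 < e -> exists d, 0 < d /\ forall t, Rabs t < d -> Rabs (f (c * t) - f 0) < e.
Proof.
  intros H e He. destruct (Rcont_eps f 0 H e He) as [d [Hd Hf]].
  exists (d / (Rabs c + 1)). split.
  - apply Rdiv_lt_0_compat; auto. pose proof (Rabs_pos c); lra.
  - intros t Ht. apply Hf. rewrite Rminus_0_r, Rabs_mult.
    pose proof (Rabs_pos c). pose proof (Rabs_pos t).
    apply Rle_lt_trans with ((Rabs c + 1) * Rabs t); [nra|].
    apply Rmult_lt_compat_l with (r := Rabs c + 1) in Ht; [|lra].
    replace ((Rabs c + 1) * (d / (Rabs c + 1))) with d in Ht by (field; lra). lra.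
Qed.

Lemma ee_cont0 : Clim (nbC (RtoC 0)) ee (RtoC 1).
Proof.
  intros e He.
  destruct (Rcont_scaled exp (- (2 * PI)) (cont_exp 0) (Rmin 1 (e/4)) ltac:(apply Rmin_pos; lra)) as [d1 [Hd1 H1]].
  destruct (Rcont_scaled cos (2 * PI) (continuity_cos 0) (e/4) ltac:(lra)) as [d2 [Hd2 H2]].
  destruct (Rcont_scaled sin (2 * PI) (continuity_sin 0) (e/8) ltac:(lra)) as [d3 [Hd3 H3]].
  exists (Rmin d1 (Rmin d2 d3)). split; [repeat apply Rmin_pos; auto|].
  intros z Hz. replace (Cminus z (RtoC 0)) with z in Hz by (destruct z; unfold Cminus, Cplus, Copp, RtoC; simpl; apply Cpair_eq; ring).
  pose proof (Re_le_Cmod z). pose proof (Im_le_Cmod z).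
  pose proof (Rmin_l d1 (Rmin d2 d3)). pose proof (Rmin_r d1 (Rmin d2 d3)).
  pose proof (Rmin_l d2 d3). pose proof (Rmin_r d2 d3).
  specialize (H1 (Im z) ltac:(lra)). specialize (H2 (Re z) ltac:(lra)). specialize (H3 (Re z) ltac:(lra)).
  rewrite exp_0 in H1. rewrite cos_0 in H2. rewrite sin_0 in H3.
  pose proof (Rmin_l 1 (e/4)). pose proof (Rmin_r 1 (e/4)).
  replace (- (2 * PI) * Im z) with (- (2 * PI * Im z)) in H1 by ring.
  set (A := exp (- (2 * PI * Im z))) in *. set (B := cos (2 * PI * Re z)) in *. set (S := sin (2 * PI * Re z)) in *.
  unfold ee. fold A B S.
  eapply Rle_lt_trans; [apply Cmod_le_sum|]. unfold Cmult, Cminus, Cplus, Copp, RtoC; simpl.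
  match goal with |- Rabs ?x + Rabs ?y < e => replace x with ((A-1)*B + (B-1)) by ring; replace y with (A*S) by ring end.
  assert (HB : Rabs B <= 1) by (apply Rabs_le; apply COS_bound).
  rewrite Rminus_0_r in H3.
  assert (HA : Rabs A <= 2).
  { rewrite Rabs_pos_eq by (left; apply exp_pos). destruct (Rabs_def2 _ _ (Rlt_le_trans _ _ _ H1 H8)). lra. }
  eapply Rle_lt_trans; [apply Rplus_le_compat_r, Rabs_triang|].
  rewrite !Rabs_mult.
  pose proof (Rabs_pos (A - 1)). pose proof (Rabs_pos S). pose proof (Rabs_pos B). pose proof (Rabs_pos A).
  assert (Rabs (A - 1) * Rabs B <= e/4).
  { apply Rle_trans with (Rabs (A-1) * 1); [apply Rmult_le_compat_l; auto| lra]. }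
  assert (Rabs A * Rabs S <= 2 * (e/8)).
  { apply Rmult_le_compat; lra. }
  lra.
Qed.

Section ContC.
Lemma contC_const c z0 : contC (fun _ => c) z0.
Proof. apply Clim_const, nbC_filter. Qed.
Lemma contC_plus f g z0 : contC f z0 -> contC g z0 -> contC (fun z => Cplus (f z) (g z)) z0.
Proof. intros. apply Clim_plus; auto. apply nbC_filter. Qed.
Lemma contC_mult f g z0 : contC f z0 -> contC g z0 -> contC (fun z => Cmult (f z) (g z)) z0.
Proof. intros. apply Clim_mult; auto. apply nbC_filter. Qed.
Lemma contC_opp f z0 : contC f z0 -> contC (fun z => Copp (f z)) z0.
Proof. intros. apply Clim_opp; auto. apply nbC_filter. Qed.
Lemma contC_comp f g z0 : contC g z0 -> contC f (g z0) -> contC (fun z => f (g z)) z0.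
Proof. intros. unfold contC. apply (Clim_comp (nbC z0) g f (g z0)); auto. Qed.
End ContC.

Lemma ee_cont z0 : contC ee z0.
Proof.
  intros e He.
  assert (Hm : 0 < Cmod (ee z0)) by (apply Cmod_gt_0, ee_nz).
  destruct (ee_cont0 (e / Cmod (ee z0)) ltac:(apply Rdiv_lt_0_compat; auto)) as [d [Hd H]].
  exists d; split; auto. intros z Hz.
  replace (Cminus (ee z) (ee z0)) with (Cmult (ee z0) (Cminus (ee (Cminus z z0)) (RtoC 1))).
  - rewrite Cmod_mult. specialize (H (Cminus z z0)).
    replace (Cminus (Cminus z z0) (RtoC 0)) with (Cminus z z0) in H by ring.
    specialize (H Hz). apply Rmult_lt_compat_l with (r := Cmod (ee z0)) in H; auto.
    replace (Cmod (ee z0) * (e / Cmod (ee z0))) with e in H by (field; lra). auto.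
  - replace z with (Cplus z0 (Cminus z z0)) at 2 by ring. rewrite ee_add. ring.
Qed.

Lemma exp_le x y : x <= y -> exp x <= exp y.
Proof. intros [H|H]; [left; apply exp_increasing; auto| subst; lra]. Qed.

Definition gb (a b : R) (p : nat) : R := exp (a * INR p - b * INR p ^ 2).

Lemma exp_INR_pow x p : exp (x * INR p) = exp x ^ p.
Proof. induction p. - simpl. rewrite Rmult_0_r, exp_0; auto.
  - rewrite S_INR. simpl (exp x ^ S p). rewrite <- IHp, <- exp_plus. f_equal; ring. Qed.

Lemma ex_series_gb a b : 0 < b -> ex_series (gb a b).
Proof.
  intros Hb. set (K := exp ((a + 1) ^ 2 / (4 * b))).
  apply (ex_series_dom _ (fun p => K * exp (-1) ^ p)).
  - intro p. unfold gb. rewrite Rabs_pos_eq by (left; apply exp_pos).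
    rewrite <- exp_INR_pow. unfold K. rewrite <- exp_plus. apply exp_le.
    set (x := INR p).
    assert (0 <= b * (x - (a+1)/(2*b))^2) by (apply Rmult_le_pos; [lra| apply pow2_ge_0]).
    assert (b * (x - (a+1)/(2*b))^2 = b * x^2 - (a+1) * x + (a+1)^2/(4*b)) by (field; lra).
    lra.
  - apply (ex_series_scal_l K (fun p => exp (-1) ^ p)). apply ex_series_geom.
    rewrite Rabs_pos_eq by (left; apply exp_pos). rewrite <- exp_0. apply exp_increasing. lra.
Qed.

Lemma ex_series_scal_R (c : R) (a : nat -> R) : ex_series a -> ex_series (fun p => c * a p).
Proof. intros. apply (ex_series_scal_l c a); auto. Qed.

Ltac ceq := apply injective_projections; unfold Cminus, Cplus, Cmult, Copp, RtoC, Re, Im; simpl; first [ring | (unfold Rdiv; ring) | field].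

Definition exC (a : nat -> C) := ex_series (fun p => Re (a p)) /\ ex_series (fun p => Im (a p)).

Lemma exC_dom a g : (forall p, Cmod (a p) <= g p) -> ex_series g -> exC a.
Proof. intros H Hg. split; apply (ex_series_dom _ g); auto; intro p; eapply Rle_trans; [apply Re_le_Cmod| auto| apply Im_le_Cmod| auto]. Qed.

Lemma Cseries_ext a b : (forall p, a p = b p) -> Cseries a = Cseries b.
Proof. intros H. unfold Cseries. f_equal; apply Series_ext; intro p; rewrite H; auto. Qed.

Lemma Cseries_incr_1 a : exC a -> Cseries a = Cplus (a 0%nat) (Cseries (fun p => a (S p))).
Proof. intros [H1 H2]. unfold Cseries. rewrite (Series_incr_1 _ H1), (Series_incr_1 _ H2).
  destruct (a 0%nat); unfold Cplus; simpl; auto. Qed.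

Lemma exC_incr a : exC a -> exC (fun p => a (S p)).
Proof. intros [H1 H2]; split; apply (ex_series_incr_1 (fun p => _ (a p))); auto. Qed.

Lemma Cseries_plus a b : exC a -> exC b -> Cseries (fun p => Cplus (a p) (b p)) = Cplus (Cseries a) (Cseries b).
Proof.
  intros [A1 A2] [B1 B2]. unfold Cseries, Cplus; simpl. apply Cpair_eq.
  - rewrite <- Series_plus; auto.
  - rewrite <- Series_plus; auto.
Qed.

Lemma Cseries_scal c a : exC a -> Cseries (fun p => Cmult c (a p)) = Cmult c (Cseries a).
Proof.
  intros [A1 A2]. destruct c as [cr ci]. unfold Cseries, Cmult; simpl. apply Cpair_eq.
  - rewrite Series_minus; try apply ex_series_scal_R; auto. rewrite !Series_scal_l. auto.
  - rewrite Series_plus; try apply ex_series_scal_R; auto. rewrite !Series_scal_l. auto.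
Qed.

Lemma exC_plus a b : exC a -> exC b -> exC (fun p => Cplus (a p) (b p)).
Proof.
  assert (P : forall u v : nat -> R, ex_series u -> ex_series v -> ex_series (fun p => u p + v p))
    by (intros; apply (ex_series_plus u v); auto).
  intros [A1 A2] [B1 B2]; split.
  - apply (ex_series_ext (fun p => Re (a p) + Re (b p))); [intro p; destruct (a p), (b p); auto| apply P; auto].
  - apply (ex_series_ext (fun p => Im (a p) + Im (b p))); [intro p; destruct (a p), (b p); auto| apply P; auto].
Qed.

Lemma Cmod_sgnZ m : Cmod (sgnZ m) = 1.
Proof. unfold sgnZ. destruct (Z.even m); rewrite Cmod_R, ?Rabs_R1, ?Rabs_m1; auto. Qed.

Lemma Im_lin a b z w : Im (Cplus (Cmult (RtoC a) z) (Cmult (RtoC b) w)) = a * Im z + b * Im w.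
Proof. destruct z, w; simpl; ring. Qed.

Lemma Cmod_tt eta z m : Cmod (theta_term eta z m) =
  exp (- (2 * PI * (IZR m * Im z + IZR (m * (m - 1)) / 2 * Im eta))).
Proof. unfold theta_term. rewrite Cmod_mult, Cmod_sgnZ, Cmod_ee, Im_lin. ring. Qed.

Lemma PI_pos' : 0 < PI. Proof. apply PI_RGT_0. Qed.

Lemma tt_bound_pos eta z M p : Rabs (Im z) <= M ->
  Cmod (theta_term eta z (Z.of_nat p)) <= gb (2 * PI * M + PI * Im eta) (PI * Im eta) p.
Proof.
  intros HM. rewrite Cmod_tt. unfold gb. apply exp_le.
  rewrite mult_IZR, minus_IZR, <- INR_IZR_INZ.
  pose proof (pos_INR p). pose proof PI_pos'.
  assert (- (INR p * Im z) <= M * INR p).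
  { apply Rabs_le_between' in HM || idtac. pose proof (Rabs_le_between (Im z) M) as _H || idtac.
    destruct (Rabs_def2b _ _ HM) || idtac. unfold Rabs in HM; destruct (Rcase_abs (Im z)); nra. }
  simpl. nra.
Qed.

Lemma abs_bound_lin x M t : Rabs x <= M -> 0 <= t -> - (t * x) <= M * t /\ t * x <= M * t.
Proof. intros H Ht. unfold Rabs in H; destruct (Rcase_abs x); split; nra. Qed.

Lemma tt_bound_neg eta z M p : Rabs (Im z) <= M -> 0 < Im eta ->
  Cmod (theta_term eta z (- Z.of_nat (S p))) <= exp (2 * PI * M) * gb (2 * PI * M) (PI * Im eta) p.
Proof.
  intros HM He. rewrite Cmod_tt. unfold gb. rewrite <- exp_plus. apply exp_le.
  rewrite mult_IZR, minus_IZR, opp_IZR, <- INR_IZR_INZ, S_INR.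
  pose proof (pos_INR p). pose proof PI_pos'.
  destruct (abs_bound_lin (Im z) M (INR p + 1) HM ltac:(lra)).
  assert (0 <= M) by (pose proof (Rabs_pos (Im z)); lra).
  assert (PI * ((INR p + 1) * Im z) <= PI * (M * (INR p + 1))) by (apply Rmult_le_compat_l; lra).
  assert (0 <= PI * Im eta * (3 * INR p + 2)) by (apply Rmult_le_pos; [apply Rmult_le_pos|]; lra).
  simpl. nra.
Qed.

Fixpoint Gs (n : nat) (z : C) : C :=
  match n with O => RtoC 0 | S k => Cplus (Gs k z) (ee (Cmult (RtoC (INR k)) z)) end.

Lemma Gs_mul n z : Cmult (Cminus (ee z) (RtoC 1)) (Gs n z) = Cminus (ee (Cmult (RtoC (INR n)) z)) (RtoC 1).
Proof.
  induction n.
  - simpl. replace (Cmult (RtoC 0) z) with (RtoC 0) by ceq. rewrite ee_0. ring.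
  - simpl Gs. rewrite Cmult_plus_distr_l, IHn.
    replace (Cmult (RtoC (INR (S n))) z) with (Cplus z (Cmult (RtoC (INR n)) z)) by (rewrite S_INR; ceq).
    rewrite ee_add. ring.
Qed.

Lemma Gs_cont n z0 : contC (Gs n) z0.
Proof.
  induction n; simpl.
  - apply contC_const.
  - apply contC_plus; auto. apply (contC_comp ee (fun z => Cmult (RtoC (INR n)) z)).
    + apply contC_mult; [apply contC_const| apply contC_id].
    + apply ee_cont.
Qed.

Lemma Cmod_ee_lin (a : R) z M : Rabs (Im z) <= M -> 0 <= a -> Cmod (ee (Cmult (RtoC a) z)) <= exp (2 * PI * M * a).
Proof.
  intros HM Ha. rewrite Cmod_ee. apply exp_le. destruct z; simpl in *.
  destruct (abs_bound_lin r0 M a HM Ha). pose proof PI_pos'. nra.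
Qed.

Lemma Gs_bound n z M : Rabs (Im z) <= M -> Cmod (Gs n z) <= INR n * exp (2 * PI * M * INR n).
Proof.
  intros HM. assert (0 <= M) by (pose proof (Rabs_pos (Im z)); lra).
  induction n; simpl Gs.
  - rewrite Cmod_0. simpl. lra.
  - eapply Rle_trans; [apply Cmod_triangle|].
    pose proof (Cmod_ee_lin (INR n) z M HM (pos_INR n)).
    rewrite S_INR. pose proof (pos_INR n). pose proof PI_pos'.
    assert (exp (2 * PI * M * INR n) <= exp (2 * PI * M * (INR n + 1))) by (apply exp_le; nra).
    pose proof (exp_pos (2 * PI * M * INR n)). nra.
Qed.

Definition hterm (eta z : C) (p : nat) : C :=
  Cmult (Cmult (Cmult (sgnZ (Z.of_nat (S p))) (ee (Cmult (RtoC (INR p * (INR p + 1) / 2)) eta)))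
               (ee (Cmult (RtoC (- INR p)) z)))
        (Gs (2 * p + 1) z).

Definition hfun (eta z : C) : C := Cseries (hterm eta z).

Lemma sgnZ_succ p : sgnZ (Z.of_nat (S p)) = Copp (sgnZ (Z.of_nat p)).
Proof. unfold sgnZ. rewrite Nat2Z.inj_succ, Z.even_succ, <- Z.negb_even.
  destruct (Z.even (Z.of_nat p)); simpl; ceq. Qed.

Lemma sgnZ_opp m : sgnZ (- m) = sgnZ m.
Proof. unfold sgnZ. rewrite Z.even_opp. auto. Qed.

Lemma tt_pair eta z p :
  Cplus (theta_term eta z (Z.of_nat (S p))) (theta_term eta z (- Z.of_nat p)) =
  Cmult (Cminus (ee z) (RtoC 1)) (hterm eta z p).
Proof.
  unfold theta_term, hterm.
  set (c := Cmult (RtoC (INR p * (INR p + 1) / 2)) eta).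
  replace (Cplus (Cmult (RtoC (IZR (Z.of_nat (S p)))) z) (Cmult (RtoC (IZR (Z.of_nat (S p) * (Z.of_nat (S p) - 1)) / 2)) eta))
    with (Cplus c (Cplus (Cmult (RtoC (- INR p)) z) (Cmult (RtoC (INR (2 * p + 1))) z))).
  2:{ unfold c. rewrite mult_IZR, minus_IZR, <- INR_IZR_INZ, S_INR, plus_INR, mult_INR. simpl (INR 2). simpl (INR 1). clear c. ceq. }
  replace (Cplus (Cmult (RtoC (IZR (- Z.of_nat p))) z) (Cmult (RtoC (IZR (- Z.of_nat p * (- Z.of_nat p - 1)) / 2)) eta))
    with (Cplus c (Cmult (RtoC (- INR p)) z)).
  2:{ unfold c. rewrite mult_IZR, minus_IZR, opp_IZR, <- INR_IZR_INZ. ceq. }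
  rewrite !ee_add, sgnZ_opp, sgnZ_succ.
  pose proof (Gs_mul (2 * p + 1) z) as G.
  replace (Cmult (Cminus (ee z) (RtoC 1))
     (Cmult (Cmult (Cmult (Copp (sgnZ (Z.of_nat p))) (ee c)) (ee (Cmult (RtoC (- INR p)) z))) (Gs (2 * p + 1) z)))
    with (Cmult (Cmult (Cmult (Copp (sgnZ (Z.of_nat p))) (ee c)) (ee (Cmult (RtoC (- INR p)) z)))
           (Cmult (Cminus (ee z) (RtoC 1)) (Gs (2 * p + 1) z))) by ring.
  rewrite G. ring.
Qed.

Lemma Cmod_ee_lin' (a : R) z M : Rabs (Im z) <= M -> Cmod (ee (Cmult (RtoC a) z)) <= exp (2 * PI * M * Rabs a).
Proof.
  intros HM. rewrite Cmod_ee. apply exp_le. destruct z; simpl in *.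
  pose proof PI_pos'. pose proof (Rabs_pos r0). pose proof (Rabs_pos a).
  assert (- (a * r0) <= Rabs a * M).
  { eapply Rle_trans; [apply Rle_abs|]. rewrite Rabs_Ropp, Rabs_mult. apply Rmult_le_compat_l; lra. }
  replace (a * r0 + 0 * r) with (a * r0) by ring. nra.
Qed.

Lemma hterm_bound eta z M p : Rabs (Im z) <= M -> 0 < Im eta ->
  Cmod (hterm eta z p) <= exp (2 * PI * M) * gb (6 * PI * M + 2) (PI * Im eta) p.
Proof.
  intros HM He. assert (HM0 : 0 <= M) by (pose proof (Rabs_pos (Im z)); lra).
  unfold hterm. rewrite !Cmod_mult, Cmod_sgnZ, Rmult_1_l.
  pose proof (Cmod_ee_lin' (- INR p) z M HM) as E1.
  rewrite Rabs_Ropp, Rabs_pos_eq in E1 by apply pos_INR.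
  pose proof (Gs_bound (2 * p + 1) z M HM) as E2.
  rewrite Cmod_ee, Im_lin0 in * || idtac.
  assert (E0 : Cmod (ee (Cmult (RtoC (INR p * (INR p + 1) / 2)) eta)) = exp (- (PI * Im eta * (INR p ^ 2 + INR p)))).
  { rewrite Cmod_ee. f_equal. destruct eta; simpl. field. }
  rewrite E0.
  rewrite plus_INR, mult_INR in E2. simpl (INR 2) in E2. simpl (INR 1) in E2.
  pose proof (pos_INR p) as Hp. pose proof PI_pos' as Hpi.
  assert (E3 : (1 + 1) * INR p + 1 <= exp (2 * INR p)) by (pose proof (exp_ineq1_le (2 * INR p)); lra).
  set (a := exp (- (PI * Im eta * (INR p ^ 2 + INR p)))).
  set (b := Cmod (ee (Cmult (RtoC (- INR p)) z))).
  set (c := Cmod (Gs (2 * p + 1) z)).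
  assert (0 <= a) by (left; apply exp_pos).
  assert (0 <= b) by apply Cmod_ge_0. assert (0 <= c) by apply Cmod_ge_0.
  apply Rle_trans with (a * exp (2 * PI * M * INR p) * (exp (2 * INR p) * exp (2 * PI * M * ((1 + 1) * INR p + 1)))).
  - apply Rmult_le_compat; try apply Rmult_le_pos; auto.
    + apply Rmult_le_compat_l; auto.
    + eapply Rle_trans; [apply E2|]. apply Rmult_le_compat_r; [left; apply exp_pos| auto].
  - unfold a, gb. rewrite <- !exp_plus. apply exp_le.
    assert (0 <= PI * Im eta * INR p) by (apply Rmult_le_pos; [apply Rmult_le_pos|]; lra).
    nra.
Qed.

Lemma exC_tt_pos eta z : 0 < Im eta -> exC (fun p => theta_term eta z (Z.of_nat p)).
Proof.
  intros He. apply (exC_dom _ (gb (2 * PI * Rabs (Im z) + PI * Im eta) (PI * Im eta))).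
  - intro p. apply tt_bound_pos. lra.
  - apply ex_series_gb. pose proof PI_pos'. nra.
Qed.

Lemma exC_tt_neg eta z : 0 < Im eta -> exC (fun p => theta_term eta z (- Z.of_nat (S p))).
Proof.
  intros He. apply (exC_dom _ (fun p => exp (2 * PI * Rabs (Im z)) * gb (2 * PI * Rabs (Im z)) (PI * Im eta) p)).
  - intro p. apply tt_bound_neg; auto. lra.
  - apply ex_series_scal_R, ex_series_gb. pose proof PI_pos'. nra.
Qed.

Lemma exC_hterm eta z : 0 < Im eta -> exC (hterm eta z).
Proof.
  intros He. apply (exC_dom _ (fun p => exp (2 * PI * Rabs (Im z)) * gb (6 * PI * Rabs (Im z) + 2) (PI * Im eta) p)).
  - intro p. apply hterm_bound; auto. lra.
  - apply ex_series_scal_R, ex_series_gb. pose proof PI_pos'. nra.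
Qed.

Lemma theta_factor eta z : 0 < Im eta ->
  theta eta z = Cmult (Cminus (ee z) (RtoC 1)) (hfun eta z).
Proof.
  intros He. unfold theta, hfun.
  rewrite (Cseries_incr_1 (fun p => theta_term eta z (Z.of_nat p))) by (apply exC_tt_pos; auto).
  assert (E : Cseries (fun p => theta_term eta z (- Z.of_nat p)) =
              Cplus (theta_term eta z 0) (Cseries (fun p => theta_term eta z (- Z.of_nat (S p))))).
  { rewrite Cseries_incr_1; auto. split; apply (ex_series_incr_1 (fun p => _ (theta_term eta z (- Z.of_nat p)))); apply exC_tt_neg; auto. }
  assert (E2 : Cseries (fun p => Cplus (theta_term eta z (Z.of_nat (S p))) (theta_term eta z (- Z.of_nat p)))
               = Cplus (Cseries (fun p => theta_term eta z (Z.of_nat (S p)))) (Cseries (fun p => theta_term eta z (- Z.of_nat p)))).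
  { apply Cseries_plus.
    - apply (exC_incr (fun p => theta_term eta z (Z.of_nat p))). apply exC_tt_pos; auto.
    - split; apply (ex_series_incr_1 (fun p => _ (theta_term eta z (- Z.of_nat p)))); apply exC_tt_neg; auto. }
  rewrite E in E2.
  rewrite <- Cseries_scal by (apply exC_hterm; auto).
  rewrite <- (Cseries_ext _ _ (tt_pair eta z)).
  rewrite E2. change (Z.of_nat 0) with 0%Z. ring.
Qed.

Lemma Cseries_cont (f : C -> nat -> C) z0 (g : nat -> R) d : 0 < d -> ex_series g ->
  (forall p, contC (fun z => f z p) z0) ->
  (forall z p, Cmod (Cminus z z0) < d -> Cmod (f z p) <= g p) ->
  contC (fun z => Cseries (f z)) z0.
Proof.
  intros Hd Hg Hc Hb. unfold contC.
  apply (tannery_C (nbC z0) f (f z0) g); auto.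
  - intro p. apply Hb. replace (Cminus z0 z0) with (RtoC 0) by ring. rewrite Cmod_0; auto.
  - exists d; split; auto.
Qed.

Lemma Im_near z z0 : Cmod (Cminus z z0) < 1 -> Rabs (Im z) <= Rabs (Im z0) + 1.
Proof.
  intros H. pose proof (Im_le_Cmod (Cminus z z0)).
  replace (Im (Cminus z z0)) with (Im z - Im z0) in H0 by (destruct z, z0; simpl; ring).
  pose proof (Rabs_triang_inv (Im z) (Im z0)). lra.
Qed.

Lemma contC_lin (a : R) z0 : contC (fun z => Cmult (RtoC a) z) z0.
Proof. apply contC_mult; [apply contC_const| apply contC_id]. Qed.

Lemma hfun_cont eta z0 : 0 < Im eta -> contC (hfun eta) z0.
Proof.
  intros He. unfold hfun.
  apply (Cseries_cont _ z0 (fun p => exp (2 * PI * (Rabs (Im z0) + 1)) * gb (6 * PI * (Rabs (Im z0) + 1) + 2) (PI * Im eta) p) 1).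
  - lra.
  - apply ex_series_scal_R, ex_series_gb. pose proof PI_pos'. nra.
  - intro p. unfold hterm. apply contC_mult; [apply contC_mult; [apply contC_const|]|].
    + apply (contC_comp ee (fun z => Cmult (RtoC (- INR p)) z)); [apply contC_lin| apply ee_cont].
    + apply Gs_cont.
  - intros z p Hz. apply hterm_bound; auto. apply Im_near; auto.
Qed.

Lemma theta_cont eta z0 : 0 < Im eta -> contC (theta eta) z0.
Proof.
  intros He. intros e He'.
  assert (H : contC (fun z => Cmult (Cminus (ee z) (RtoC 1)) (hfun eta z)) z0).
  { apply contC_mult; [apply contC_plus; [apply ee_cont| apply contC_const]| apply hfun_cont; auto]. }
  destruct (H e He') as [d [Hd Hz]]. exists d; split; auto. intros z Hzd.
  rewrite !theta_factor; auto.
Qed.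

Lemma theta_0 eta : 0 < Im eta -> theta eta (RtoC 0) = RtoC 0.
Proof. intros He. rewrite theta_factor, ee_0; auto. ring. Qed.

Definition ev (P : nat -> Prop) := exists N, forall n, (N <= n)%nat -> P n.
Global Instance ev_filter : Filter ev.
Proof.
  constructor.
  - exists 0%nat; auto.
  - intros P Q [N1 H1] [N2 H2]. exists (max N1 N2). intros n Hn. split; [apply H1|apply H2]; lia.
  - intros P Q H [N HN]. exists N; auto.
Qed.

Section JTP.
Variable eta : C.
Hypothesis Heta : 0 < Im eta.

Definition pw (j : Z) : C := ee (Cmult (RtoC (IZR j)) eta).

Lemma pw_add a b : pw (a + b) = Cmult (pw a) (pw b).
Proof. unfold pw. rewrite <- ee_add. f_equal. rewrite plus_IZR. ceq. Qed.

Lemma pw_0 : pw 0 = RtoC 1.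
Proof. unfold pw. replace (Cmult (RtoC (IZR 0)) eta) with (RtoC 0) by ceq. apply ee_0. Qed.

Lemma pw_opp a : Cmult (pw a) (pw (- a)) = RtoC 1.
Proof. rewrite <- pw_add. replace (a + - a)%Z with 0%Z by lia. apply pw_0. Qed.

Lemma pw_nz a : pw a <> RtoC 0.
Proof. apply ee_nz. Qed.

Definition rr := exp (- (2 * PI * Im eta)).

Lemma rr_pos : 0 < rr. Proof. apply exp_pos. Qed.
Lemma rr_lt1 : rr < 1.
Proof. unfold rr. rewrite <- exp_0. apply exp_increasing. pose proof PI_pos'. nra. Qed.

Lemma Cmod_pw a : Cmod (pw a) = exp (- (2 * PI * Im eta) * IZR a).
Proof. unfold pw. rewrite Cmod_ee. f_equal. unfold Im; simpl. ring. Qed.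

Lemma Cmod_pw_nat k : Cmod (pw (Z.of_nat k)) = rr ^ k.
Proof. rewrite Cmod_pw, <- INR_IZR_INZ, exp_INR_pow. auto. Qed.

Lemma pw_pos_lt1 k : (0 < k)%Z -> Cmod (pw k) < 1.
Proof. intros Hk. rewrite Cmod_pw. rewrite <- exp_0. apply exp_increasing.
  apply IZR_lt in Hk. pose proof PI_pos'. assert (0 < 2 * PI * Im eta) by nra.
  assert (0 < 2 * PI * Im eta * IZR k) by (apply Rmult_lt_0_compat; auto). nra. Qed.

Lemma one_minus_pw_nz k : (0 < k)%Z -> Cminus (RtoC 1) (pw k) <> RtoC 0.
Proof. intros Hk E. assert (pw k = RtoC 1) by (apply Ceq_minus in E; auto).
  pose proof (pw_pos_lt1 k Hk). rewrite H, Cmod_1 in H0. lra. Qed.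

Fixpoint qp (k : nat) : C :=
  match k with O => RtoC 1 | S k' => Cmult (qp k') (Cminus (RtoC 1) (pw (Z.of_nat (S k')))) end.

Lemma qp_S k : qp (S k) = Cmult (qp k) (Cminus (RtoC 1) (pw (Z.of_nat (S k)))).
Proof. reflexivity. Qed.

Lemma qp_nz k : qp k <> RtoC 0.
Proof. induction k; simpl. - apply C1_nz. - apply Cmult_neq_0; auto. apply one_minus_pw_nz. lia. Qed.

Definition ip (j : Z) : C := if (j <? 0)%Z then RtoC 0 else Cinv (qp (Z.to_nat j)).

Lemma ip_neg j : (j < 0)%Z -> ip j = RtoC 0.
Proof. intros H. unfold ip. apply Z.ltb_lt in H. rewrite H. auto. Qed.

Lemma ip_nat k : ip (Z.of_nat k) = Cinv (qp k).
Proof. unfold ip. destruct (Z.of_nat k <? 0)%Z eqn:E. - apply Z.ltb_lt in E. lia. - rewrite Nat2Z.id. auto. Qed.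

Lemma ip_rec j : ip j = Cmult (Cminus (RtoC 1) (pw (j + 1))) (ip (j + 1)).
Proof.
  destruct (Z_lt_le_dec j (-1)) as [H|H].
  - rewrite !ip_neg by lia. ring.
  - destruct (Z.eq_dec j (-1)) as [->|Hn].
    + rewrite ip_neg by lia. simpl (-1 + 1)%Z. rewrite pw_0. ring.
    + replace j with (Z.of_nat (Z.to_nat j)) by (apply Z2Nat.id; lia).
      set (k := Z.to_nat j).
      replace (Z.of_nat k + 1)%Z with (Z.of_nat (S k)) by lia.
      rewrite !ip_nat, qp_S.
      field. split; [apply one_minus_pw_nz; lia| apply qp_nz].
Qed.

Definition pwh (m : Z) : C := ee (Cmult (RtoC (IZR (m * (m - 1)) / 2)) eta).

Definition acoef (N : nat) (m : Z) : C :=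
  Cmult (Cmult (Cmult (Cmult (qp (2 * N)) (ip (Z.of_nat N + m))) (ip (Z.of_nat N - m))) (sgnZ m)) (pwh m).

Lemma pwh_m1 m : pwh (m - 1) = Cmult (pwh m) (pw (1 - m)).
Proof. unfold pwh, pw. rewrite <- ee_add. f_equal. rewrite !mult_IZR, !minus_IZR. ceq. Qed.

Lemma pwh_p1 m : pwh (m + 1) = Cmult (pwh m) (pw m).
Proof. unfold pwh, pw. rewrite <- ee_add. f_equal. rewrite !mult_IZR, !minus_IZR, plus_IZR. ceq. Qed.

Lemma sgnZ_m1 m : sgnZ (m - 1) = Copp (sgnZ m).
Proof. unfold sgnZ. replace (m - 1)%Z with (Z.pred m) by lia. rewrite Z.even_pred, <- Z.negb_even.
  destruct (Z.even m); simpl; ceq. Qed.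

Lemma sgnZ_p1 m : sgnZ (m + 1) = Copp (sgnZ m).
Proof. unfold sgnZ. replace (m + 1)%Z with (Z.succ m) by lia. rewrite Z.even_succ, <- Z.negb_even.
  destruct (Z.even m); simpl; ceq. Qed.

Lemma acoef_rec N m :
  acoef (S N) m = Cminus (Cminus (Cmult (Cplus (RtoC 1) (pw (2 * Z.of_nat N + 1))) (acoef N m))
                                 (Cmult (pw (Z.of_nat N)) (acoef N (m - 1))))
                         (Cmult (pw (Z.of_nat N + 1)) (acoef N (m + 1))).
Proof.
  unfold acoef. set (n := Z.of_nat N).
  rewrite pwh_m1, pwh_p1, sgnZ_m1, sgnZ_p1.
  replace (Z.of_nat (S N)) with (n + 1)%Z by (unfold n; lia).
  replace (2 * S N)%nat with (S (S (2 * N))) by lia. rewrite !qp_S.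
  replace (Z.of_nat (S (2 * N))) with (2 * n + 1)%Z by (unfold n; lia).
  replace (Z.of_nat (S (S (2 * N)))) with (2 * n + 2)%Z by (unfold n; lia).
  (* express all ip in terms of ip (n+m+1), ip (n-m+1) *)
  rewrite (ip_rec (n + m)%Z). rewrite (ip_rec (n - m)%Z).
  rewrite (ip_rec (n + (m - 1))%Z). rewrite (ip_rec (n + (m - 1) + 1)%Z).
  rewrite (ip_rec (n - (m + 1))%Z). rewrite (ip_rec (n - (m + 1) + 1)%Z).
  replace (n + (m - 1) + 1 + 1)%Z with (n + m + 1)%Z by lia.
  replace (n - (m + 1) + 1 + 1)%Z with (n - m + 1)%Z by lia.
  replace (n - (m - 1))%Z with (n - m + 1)%Z by lia.
  replace (n + (m + 1))%Z with (n + m + 1)%Z by lia.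
  replace (n + 1 + m)%Z with (n + m + 1)%Z by lia.
  replace (n + 1 - m)%Z with (n - m + 1)%Z by lia.
  replace (n + (m - 1) + 1)%Z with (n + m)%Z by lia.
  replace (n - (m + 1) + 1)%Z with (n - m)%Z by lia.
  set (I1 := ip (n + m + 1)). set (I2 := ip (n - m + 1)).
  set (p := pw 1). set (Q := pw n). set (u := pw m).
  assert (Hu : u <> RtoC 0) by apply pw_nz.
  set (v := pw (- m)).
  assert (Ev : v = Cinv u).
  { assert (E := pw_opp m). fold u v in E. apply (f_equal (Cmult (Cinv u))) in E.
    rewrite Cmult_assoc, Cinv_l, Cmult_1_l, Cmult_1_r in E; auto. }
  assert (X1 : pw (2 * n + 1) = Cmult p (Cmult Q Q)) by (unfold p, Q; rewrite <- !pw_add; f_equal; lia).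
  assert (X2 : pw (2 * n + 2) = Cmult p (Cmult p (Cmult Q Q))) by (unfold p, Q; rewrite <- !pw_add; f_equal; lia).
  assert (X3 : pw (n + m + 1) = Cmult Q (Cmult u p)) by (unfold p, Q, u; rewrite <- !pw_add; f_equal; lia).
  assert (X4 : pw (n - m + 1) = Cmult Q (Cmult v p)) by (unfold p, Q, v; rewrite <- !pw_add; f_equal; lia).
  assert (X5 : pw (n + m) = Cmult Q u) by (unfold Q, u; rewrite <- !pw_add; f_equal; lia).
  assert (X6 : pw (n - m) = Cmult Q v) by (unfold Q, v; rewrite <- !pw_add; f_equal; lia).
  assert (X7 : pw (1 - m) = Cmult p v) by (unfold p, v; rewrite <- !pw_add; f_equal; lia).
  assert (X8 : pw (n + 1) = Cmult Q p) by (unfold p, Q; rewrite <- !pw_add; f_equal; lia).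
  replace (Z.of_nat (S (2 * N))) with (2 * n + 1)%Z by (unfold n; lia).
  replace (Z.of_nat (S (S (2 * N)))) with (2 * n + 2)%Z by (unfold n; lia).
  rewrite X1, X2, X3, X4, X5, X6, X7, X8. rewrite Ev.
  field. auto.
Qed.


Lemma acoef_out N m : (Z.of_nat N < m \/ m < - Z.of_nat N)%Z -> acoef N m = RtoC 0.
Proof.
  intros [H|H]; unfold acoef.
  - rewrite (ip_neg (Z.of_nat N - m)) by lia. ring.
  - rewrite (ip_neg (Z.of_nat N + m)) by lia. ring.
Qed.

Fixpoint LS (lo : Z) (len : nat) (f : Z -> C) : C :=
  match len with O => RtoC 0 | S l => Cplus (f lo) (LS (lo + 1) l f) end.

Lemma LS_ext lo len f g : (forall m, f m = g m) -> LS lo len f = LS lo len g.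
Proof. revert lo; induction len; intros lo H; simpl; auto. rewrite H, IHlen; auto. Qed.

Lemma LS_plus lo len f g : LS lo len (fun m => Cplus (f m) (g m)) = Cplus (LS lo len f) (LS lo len g).
Proof. revert lo; induction len; intros lo; simpl. - ring. - rewrite IHlen. ring. Qed.

Lemma LS_scal lo len c f : LS lo len (fun m => Cmult c (f m)) = Cmult c (LS lo len f).
Proof. revert lo; induction len; intros lo; simpl. - ring. - rewrite IHlen. ring. Qed.

Lemma LS_shift lo len f c : LS lo len (fun m => f (m + c)%Z) = LS (lo + c) len f.
Proof. revert lo; induction len; intros lo; simpl; auto. rewrite IHlen. f_equal. f_equal. lia. Qed.

Lemma LS_last lo len f : LS lo (S len) f = Cplus (LS lo len f) (f (lo + Z.of_nat len)%Z).
Proof.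
  revert lo; induction len; intros lo.
  - simpl. replace (lo + 0)%Z with lo by lia. ring.
  - change (LS lo (S (S len)) f) with (Cplus (f lo) (LS (lo + 1) (S len) f)).
    rewrite IHlen. simpl. replace (lo + 1 + Z.of_nat len)%Z with (lo + Z.pos (Pos.of_succ_nat len))%Z by lia. ring.
Qed.

Lemma LS_zero lo len f : (forall m, (lo <= m < lo + Z.of_nat len)%Z -> f m = RtoC 0) -> LS lo len f = RtoC 0.
Proof.
  revert lo; induction len; intros lo H; simpl; auto.
  rewrite H by lia. rewrite IHlen. ring. intros m Hm. apply H. lia.
Qed.

Lemma LS_single lo len f c : (lo <= c < lo + Z.of_nat len)%Z -> (forall m, m <> c -> f m = RtoC 0) -> LS lo len f = f c.
Proof.
  revert lo; induction len; intros lo Hc H; [simpl in Hc; lia|]. simpl.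
  destruct (Z.eq_dec lo c) as [->|Hn].
  - rewrite LS_zero. ring. intros m Hm. apply H. lia.
  - rewrite H by auto. rewrite IHlen; auto. ring. lia.
Qed.

Definition xp (w : C) (m : Z) : C := ee (Cmult (RtoC (IZR m)) w).

Lemma xp_p1 w m : xp w (m + 1) = Cmult (ee w) (xp w m).
Proof. unfold xp. rewrite <- ee_add. f_equal. rewrite plus_IZR. ceq. Qed.

Lemma xp_m1 w m : xp w (m - 1) = Cmult (ee (Copp w)) (xp w m).
Proof. unfold xp. rewrite <- ee_add. f_equal. rewrite minus_IZR. ceq. Qed.

Lemma xp_0 w : xp w 0 = RtoC 1.
Proof. unfold xp. replace (Cmult (RtoC (IZR 0)) w) with (RtoC 0) by ceq. apply ee_0. Qed.

Fixpoint Pp (N : nat) (w : C) : C :=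
  match N with O => RtoC 1
  | S k => Cmult (Cmult (Pp k w) (Cminus (RtoC 1) (Cmult (ee w) (pw (Z.of_nat k)))))
                 (Cminus (RtoC 1) (Cmult (ee (Copp w)) (pw (Z.of_nat k + 1)))) end.

Lemma acoef_0_0 : acoef 0 0 = RtoC 1.
Proof.
  unfold acoef, ip, sgnZ, pwh. simpl.
  replace (Cmult (RtoC (0 / 2)) eta) with (RtoC 0) by ceq. rewrite ee_0.
  field.
Qed.

Lemma JTPfin w : forall N K, (N <= K)%nat ->
  Pp N w = LS (- Z.of_nat K) (2 * K + 1) (fun m => Cmult (acoef N m) (xp w m)).
Proof.
  induction N; intros K HK.
  - rewrite (LS_single _ _ _ 0%Z).
    + rewrite acoef_0_0, xp_0. simpl. ring.
    + lia.
    + intros m Hm. rewrite acoef_out. ring. lia.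
  - assert (IH := IHN K ltac:(lia)).
    set (n := Z.of_nat N) in *.
    set (lo := (- Z.of_nat K)%Z). set (len := (2 * K + 1)%nat).
    set (g := fun m => Cmult (acoef N m) (xp w m)) in *.
    assert (Ey : ee (Copp w) = Cinv (ee w)).
    { transitivity (Cmult (ee (Copp w)) (Cmult (ee w) (Cinv (ee w)))).
      - rewrite Cinv_r by apply ee_nz. ring.
      - rewrite Cmult_assoc, ee_opp_mul. ring. }
    rewrite (LS_ext _ _ _ (fun m => Cminus (Cminus (Cmult (Cplus (RtoC 1) (pw (2 * n + 1))) (g m))
                     (Cmult (Cmult (pw n) (ee w)) (g (m + -1)%Z)))
                     (Cmult (Cmult (pw (n + 1)) (ee (Copp w))) (g (m + 1)%Z)))).
    2:{ intro m. unfold g. rewrite acoef_rec. fold n.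
        replace (m + -1)%Z with (m - 1)%Z by lia.
        rewrite xp_m1, xp_p1. rewrite Ey. field. apply ee_nz. }
    unfold Cminus. rewrite !LS_plus.
    rewrite (LS_ext _ _ (fun m => Copp _) (fun m => Cmult (Copp (Cmult (pw n) (ee w))) (g (m + -1)%Z))) by (intro; ring).
    rewrite (LS_ext _ _ (fun m => Copp (Cmult (Cmult (pw (n + 1)) (ee (Copp w))) _)) (fun m => Cmult (Copp (Cmult (pw (n + 1)) (ee (Copp w)))) (g (m + 1)%Z))) by (intro; ring).
    rewrite !LS_scal, !LS_shift.
    assert (E1 : LS (lo + -1) len g = LS lo len g).
    { unfold len. replace (2 * K + 1)%nat with (S (2 * K)) by lia.
      change (LS (lo + -1) (S (2*K)) g) with (Cplus (g (lo + -1)%Z) (LS (lo + -1 + 1) (2*K) g)).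
      rewrite (LS_last lo (2 * K) g). replace (lo + -1 + 1)%Z with lo by lia.
      assert (Z1 : g (lo + -1)%Z = RtoC 0) by (unfold g; rewrite acoef_out by (unfold lo; lia); ring).
      assert (Z2 : g (lo + Z.of_nat (2 * K))%Z = RtoC 0) by (unfold g; rewrite acoef_out by (unfold lo; lia); ring).
      rewrite Z1, Z2. ring. }
    assert (E2 : LS (lo + 1) len g = LS lo len g).
    { unfold len. replace (2 * K + 1)%nat with (S (2 * K)) by lia.
      change (LS lo (S (2*K)) g) with (Cplus (g lo) (LS (lo + 1) (2*K) g)).
      rewrite (LS_last (lo + 1) (2 * K) g).
      assert (Z1 : g lo = RtoC 0) by (unfold g; rewrite acoef_out by (unfold lo; lia); ring).
      assert (Z2 : g (lo + 1 + Z.of_nat (2 * K))%Z = RtoC 0) by (unfold g; rewrite acoef_out by (unfold lo; lia); ring).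
      rewrite Z1, Z2. ring. }
    rewrite E1, E2. unfold lo, len. rewrite <- IH. simpl Pp. fold n.
    assert (X1 : pw (2 * n + 1) = Cmult (pw (n + 1)) (pw n)) by (rewrite <- pw_add; f_equal; lia).
    rewrite X1, Ey. field. apply ee_nz.
Qed.

End JTP.

Fixpoint rprodm (c r : R) (N : nat) : R :=
  match N with O => 1 | S k => rprodm c r k * (1 - c * r ^ (S k)) end.
Fixpoint rprodp (c r : R) (N : nat) : R :=
  match N with O => 1 | S k => rprodp c r k * (1 + c * r ^ (S k)) end.
Fixpoint psum (r : R) (N : nat) : R :=
  match N with O => 0 | S k => psum r k + r ^ (S k) end.

Lemma pow_le1 r N : 0 <= r <= 1 -> 0 <= r ^ N <= 1.
Proof. intros H. induction N; simpl; [lra|]. split; [apply Rmult_le_pos; lra|]. nra. Qed.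

Lemma psum_le r N : 0 <= r < 1 -> 0 <= psum r N <= r / (1 - r).
Proof.
  intros Hr. assert (E : psum r N = r * (1 - r ^ N) / (1 - r)).
  { induction N; simpl psum. - simpl. field. lra. - rewrite IHN. simpl. field. lra. }
  rewrite E. pose proof (pow_le1 r N ltac:(lra)).
  split.
  - apply Rmult_le_pos; [apply Rmult_le_pos; lra| left; apply Rinv_0_lt_compat; lra].
  - unfold Rdiv. apply Rmult_le_compat_r; [left; apply Rinv_0_lt_compat; lra|]. nra.
Qed.

Lemma one_minus_ge_exp t T : 0 <= t <= T -> T < 1 -> exp (- (t / (1 - T))) <= 1 - t.
Proof.
  intros Ht HT. set (s := t / (1 - T)).
  assert (Hs : 0 <= s) by (unfold s; apply Rmult_le_pos; [lra| left; apply Rinv_0_lt_compat; lra]).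
  assert (E1 : 1 + s <= exp s) by apply exp_ineq1_le.
  rewrite exp_Ropp. apply Rle_trans with (/ (1 + s)).
  - apply Rinv_le_contravar; lra.
  - assert (s * (1 - T) = t) by (unfold s; field; lra).
    apply Rmult_le_reg_r with (1 + s); [lra|]. rewrite Rinv_l by lra.
    nra.
Qed.

Lemma rprodm_lb c r N : 0 <= c -> 0 <= r < 1 -> c * r < 1 ->
  exp (- (c / (1 - c * r) * psum r N)) <= rprodm c r N.
Proof.
  intros Hc Hr Hcr. induction N; simpl rprodm; simpl psum.
  - rewrite Rmult_0_r, Ropp_0, exp_0. lra.
  - replace (- (c / (1 - c * r) * (psum r N + r * r ^ N))) with
      ((- (c / (1 - c * r) * psum r N)) + (- ((c * (r * r ^ N)) / (1 - c * r)))) by (field; lra).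
    rewrite exp_plus. apply Rmult_le_compat; try (left; apply exp_pos); auto.
    apply one_minus_ge_exp; auto.
    pose proof (pow_le1 r N ltac:(lra)). split; [apply Rmult_le_pos; [lra| apply Rmult_le_pos; lra]|].
    apply Rmult_le_compat_l; [lra|]. nra.
Qed.

Definition dm (c r : R) := exp (- (c / (1 - c * r) * (r / (1 - r)))).

Lemma dm_pos c r : 0 < dm c r. Proof. apply exp_pos. Qed.

Lemma rprodm_lb' c r N : 0 <= c -> 0 <= r < 1 -> c * r < 1 -> dm c r <= rprodm c r N.
Proof.
  intros. eapply Rle_trans; [|apply rprodm_lb; auto]. unfold dm. apply exp_le.
  apply Ropp_le_contravar. apply Rmult_le_compat_l.
  - apply Rmult_le_pos; [lra| left; apply Rinv_0_lt_compat; lra].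
  - apply psum_le; auto.
Qed.

Lemma rprodp_ub c r N : 0 <= c -> 0 <= r < 1 -> rprodp c r N <= exp (c * (r / (1 - r))).
Proof.
  intros Hc Hr. apply Rle_trans with (exp (c * psum r N)).
  - induction N; simpl rprodp; simpl psum.
    + rewrite Rmult_0_r, exp_0. lra.
    + rewrite (Rmult_plus_distr_l c), exp_plus. pose proof (pow_le1 r N ltac:(lra)).
      assert (0 <= rprodp c r N).
      { clear IHN H. induction N; simpl; [lra|]. apply Rmult_le_pos; auto.
        assert (0 <= r ^ N) by (apply pow_le; lra). assert (0 <= c * (r * r ^ N)) by (apply Rmult_le_pos; [lra| apply Rmult_le_pos; lra]). lra. }
      apply Rmult_le_compat; auto.
      * assert (0 <= c * (r * r ^ N)) by (apply Rmult_le_pos; [lra| apply Rmult_le_pos; lra]). lra.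
      * apply exp_ineq1_le.
  - apply exp_le. apply Rmult_le_compat_l; auto. apply psum_le; auto.
Qed.

Lemma rprodm_pos c r N : 0 <= c -> 0 <= r < 1 -> c * r < 1 -> 0 < rprodm c r N.
Proof. intros. eapply Rlt_le_trans; [apply dm_pos| apply rprodm_lb'; auto]. Qed.

Lemma Cmod_one_minus_ge z : 1 - Cmod z <= Cmod (Cminus (RtoC 1) z).
Proof.
  assert (H : Cmod (RtoC 1) <= Cmod (Cminus (RtoC 1) z) + Cmod z).
  { replace (RtoC 1) with (Cplus (Cminus (RtoC 1) z) z) at 1 by ring. apply Cmod_triangle. }
  rewrite Cmod_1 in H. lra.
Qed.

Lemma Cmod_one_minus_le z : Cmod (Cminus (RtoC 1) z) <= 1 + Cmod z.
Proof. unfold Cminus. eapply Rle_trans; [apply Cmod_triangle|]. rewrite Cmod_opp, Cmod_1. lra. Qed.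

Section Bounds.
Variable eta : C.
Hypothesis Heta : 0 < Im eta.

Notation rr := (rr eta).
Notation pw := (pw eta).
Notation qp := (qp eta).
Notation ip := (ip eta).

Lemma rr_range : 0 <= rr < 1.
Proof. split; [left; apply rr_pos| apply rr_lt1; auto]. Qed.

Lemma qp_bounds k : rprodm 1 rr k <= Cmod (qp k) <= rprodp 1 rr k.
Proof.
  pose proof rr_range.
  induction k.
  - simpl. rewrite Cmod_1. lra.
  - rewrite qp_S. cbn [rprodm rprodp].
    rewrite Cmod_mult. pose proof (Cmod_one_minus_ge (pw (Z.of_nat (S k)))).
    pose proof (Cmod_one_minus_le (pw (Z.of_nat (S k)))).
    rewrite Cmod_pw_nat in H0, H1 by auto.
    pose proof (rprodm_pos 1 rr k ltac:(lra) H ltac:(lra)).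
    pose proof (pow_le1 rr (S k) ltac:(lra)).
    split.
    + apply Rmult_le_compat; try lra.
    + apply Rmult_le_compat; try lra; try apply Cmod_ge_0.
Qed.

Definition dq := dm 1 rr.
Definition Bq := exp (1 * (rr / (1 - rr))).

Lemma dq_pos : 0 < dq. Proof. apply dm_pos. Qed.

Lemma qp_lb k : dq <= Cmod (qp k).
Proof. pose proof rr_range. eapply Rle_trans; [apply rprodm_lb'; lra| apply qp_bounds]. Qed.

Lemma qp_ub k : Cmod (qp k) <= Bq.
Proof. pose proof rr_range. eapply Rle_trans; [apply qp_bounds| apply rprodp_ub; lra]. Qed.

Lemma ip_ub j : Cmod (ip j) <= / dq.
Proof.
  pose proof dq_pos. unfold ip. destruct (j <? 0)%Z.
  - rewrite Cmod_0. left; apply Rinv_0_lt_compat; auto.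
  - rewrite Cmod_inv by (apply qp_nz; auto). apply Rinv_le_contravar; auto. apply qp_lb.
Qed.

Lemma Cmod_ee_opp w : Cmod (ee (Copp w)) = / Cmod (ee w).
Proof. rewrite !Cmod_ee. rewrite <- exp_Ropp. f_equal. unfold Im; simpl. ring. Qed.

Lemma Pp_lb w l u N : rr < l -> u * rr < 1 -> l <= Cmod (ee w) <= u ->
  Cmod (Cminus (RtoC 1) (ee w)) * rprodm u rr N * rprodm (/ l) rr (S N) <= Cmod (Pp eta (S N) w).
Proof.
  intros Hl Hu Hx. pose proof rr_range.
  assert (Hl0 : 0 < l) by lra.
  assert (Hil : / l * rr < 1) by (apply Rmult_lt_reg_l with l; [lra|]; field_simplify; lra).
  assert (Hu0 : 0 <= u) by lra.
  assert (Hy : Cmod (ee (Copp w)) <= / l) by (rewrite Cmod_ee_opp; apply Rinv_le_contravar; lra).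
  induction N.
  - simpl Pp. simpl rprodm. rewrite pw_0. rewrite !Cmod_mult, Cmod_1.
    replace (Cmult (ee w) (RtoC 1)) with (ee w) by ring.
    pose proof (Cmod_one_minus_ge (Cmult (ee (Copp w)) (pw (Z.of_nat 0 + 1)))).
    rewrite Cmod_mult in H0. change (Z.of_nat 0 + 1)%Z with (Z.of_nat 1) in H0. rewrite Cmod_pw_nat in H0.
    simpl in H0. pose proof (Cmod_ge_0 (ee (Copp w))). pose proof (Cmod_ge_0 (Cminus (RtoC 1) (ee w))).
    assert (Cmod (ee (Copp w)) * (rr * 1) <= / l * rr) by nra.
    replace (Cmod (Cminus (RtoC 1) (ee w)) * 1 * (1 * (1 - / l * (rr * 1)))) with (Cmod (Cminus (RtoC 1) (ee w)) * (1 - / l * rr)) by ring.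
    replace (1 * Cmod (Cminus (RtoC 1) (ee w)) * Cmod (Cminus (RtoC 1) (Cmult (ee (Copp w)) (pw 1))))
      with (Cmod (Cminus (RtoC 1) (ee w)) * Cmod (Cminus (RtoC 1) (Cmult (ee (Copp w)) (pw 1)))) by ring.
    apply Rmult_le_compat_l; auto. lra.
  - change (Pp eta (S (S N)) w) with
      (Cmult (Cmult (Pp eta (S N) w) (Cminus (RtoC 1) (Cmult (ee w) (pw (Z.of_nat (S N))))))
             (Cminus (RtoC 1) (Cmult (ee (Copp w)) (pw (Z.of_nat (S N) + 1))))).
    rewrite !Cmod_mult.
    change (rprodm u rr (S N)) with (rprodm u rr N * (1 - u * rr ^ (S N))).
    change (rprodm (/ l) rr (S (S N))) with (rprodm (/ l) rr (S N) * (1 - / l * rr ^ (S (S N)))).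
    pose proof (Cmod_one_minus_ge (Cmult (ee w) (pw (Z.of_nat (S N))))) as F1.
    pose proof (Cmod_one_minus_ge (Cmult (ee (Copp w)) (pw (Z.of_nat (S N) + 1)))) as F2.
    rewrite Cmod_mult, Cmod_pw_nat in F1.
    replace (Z.of_nat (S N) + 1)%Z with (Z.of_nat (S (S N))) in F2 by lia.
    rewrite Cmod_mult, Cmod_pw_nat in F2.
    pose proof (pow_le1 rr (S N) ltac:(lra)). pose proof (pow_le1 rr (S (S N)) ltac:(lra)).
    assert (A1 : 0 <= 1 - u * rr ^ S N).
    { assert (rr ^ S N <= rr) by (simpl; pose proof (pow_le1 rr N ltac:(lra)); nra). nra. }
    assert (A2 : 0 <= 1 - / l * rr ^ S (S N)).
    { assert (rr ^ S (S N) <= rr) by (simpl; pose proof (pow_le1 rr N ltac:(lra)); nra).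
      assert (0 <= / l) by (left; apply Rinv_0_lt_compat; lra). nra. }
    assert (B1 : 1 - u * rr ^ S N <= 1 - Cmod (ee w) * rr ^ S N) by nra.
    assert (B2 : 1 - / l * rr ^ S (S N) <= 1 - Cmod (ee (Copp w)) * rr ^ S (S N)) by nra.
    pose proof (rprodm_pos u rr N Hu0 H Hu). pose proof (rprodm_pos (/ l) rr (S N) ltac:(left; apply Rinv_0_lt_compat; lra) H Hil).
    pose proof (Cmod_ge_0 (Cminus (RtoC 1) (ee w))).
    set (P := Cmod (Pp eta (S N) w)) in *.
    set (a := Cmod (Cminus (RtoC 1) (ee w))) in *.
    set (R1 := rprodm u rr N) in *. set (R2 := rprodm (/ l) rr (S N)) in *.
    set (f1 := 1 - u * rr ^ S N) in *. set (f2 := 1 - / l * rr ^ S (S N)) in *.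
    set (g1 := Cmod (Cminus (RtoC 1) (Cmult (ee w) (pw (Z.of_nat (S N)))))) in *.
    replace (Z.of_nat (S N) + 1)%Z with (Z.of_nat (S (S N))) by lia.
    set (g2 := Cmod (Cminus (RtoC 1) (Cmult (ee (Copp w)) (pw (Z.of_nat (S (S N))))))) in *.
    replace (a * (R1 * f1) * (R2 * f2)) with ((a * R1 * R2) * (f1 * f2)) by ring.
    replace (P * g1 * g2) with (P * (g1 * g2)) by ring.
    assert (0 <= a * R1 * R2) by (apply Rmult_le_pos; [apply Rmult_le_pos|]; lra).
    assert (0 <= f1 * f2) by (apply Rmult_le_pos; lra).
    apply Rmult_le_compat; auto.
    apply Rmult_le_compat; lra.
Qed.

End Bounds.

Lemma Series_zero : Series (fun _ => 0) = 0.
Proof. rewrite (Series_ext _ (fun n => 0 * 0)) by (intro; ring). rewrite Series_scal_l. ring. Qed.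

Lemma ex_series_zero : ex_series (fun _ : nat => 0).
Proof.
  apply (ex_series_ext (fun p => 0 * 0 ^ p)); [intro; apply Rmult_0_l|].
  apply ex_series_scal_R, ex_series_geom. rewrite Rabs_R0; lra.
Qed.

Lemma ex_series_evzero (u : nat -> R) n : (forall p, (n <= p)%nat -> u p = 0) -> ex_series u.
Proof.
  intros H. apply (ex_series_incr_n u n). apply (ex_series_ext (fun _ => 0)); [|apply ex_series_zero].
  intro k. rewrite H; auto. lia.
Qed.

Fixpoint CS (n : nat) (a : nat -> C) : C :=
  match n with O => RtoC 0 | S k => Cplus (CS k a) (a k) end.

Lemma CS_first k a : CS (S k) a = Cplus (a 0%nat) (CS k (fun p => a (S p))).
Proof. induction k. - simpl. ring. - change (CS (S (S k)) a) with (Cplus (CS (S k) a) (a (S k))). rewrite IHk. simpl. ring. Qed.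

Lemma Cseries_fin n : forall a, (forall p, (n <= p)%nat -> a p = RtoC 0) -> Cseries a = CS n a.
Proof.
  induction n; intros a H.
  - simpl. unfold Cseries. rewrite (Series_ext _ (fun _ => 0)), (Series_ext (fun p => Im (a p)) (fun _ => 0)).
    + rewrite Series_zero. auto.
    + intro p; rewrite H by lia; auto.
    + intro p; rewrite H by lia; auto.
  - rewrite Cseries_incr_1.
    + rewrite CS_first, IHn; auto. intros p Hp. apply H. lia.
    + split; apply (ex_series_evzero _ (S n)); intros p Hp; rewrite H by auto; auto.
Qed.

Lemma LS_split K G : LS (- Z.of_nat K) (2 * K + 1) G =
  Cplus (CS (S K) (fun p => G (Z.of_nat p))) (CS K (fun p => G (- Z.of_nat (S p))%Z)).
Proof.
  induction K.
  - simpl. ring.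
  - replace (2 * S K + 1)%nat with (S (S (2 * K + 1))) by lia.
    change (LS (- Z.of_nat (S K)) (S (S (2 * K + 1))) G) with
      (Cplus (G (- Z.of_nat (S K))%Z) (LS (- Z.of_nat (S K) + 1) (S (2 * K + 1)) G)).
    rewrite LS_last. replace (- Z.of_nat (S K) + 1)%Z with (- Z.of_nat K)%Z by lia.
    rewrite IHK.
    replace (- Z.of_nat K + Z.of_nat (2 * K + 1))%Z with (Z.of_nat (S K)) by lia.
    change (CS (S (S K)) (fun p => G (Z.of_nat p))) with (Cplus (CS (S K) (fun p => G (Z.of_nat p))) (G (Z.of_nat (S K)))).
    change (CS (S K) (fun p => G (- Z.of_nat (S p))%Z)) with (Cplus (CS K (fun p => G (- Z.of_nat (S p))%Z)) (G (- Z.of_nat (S K))%Z)).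
    ring.
Qed.

Lemma Clim_eqL {X} F f (L L' : C) : L = L' -> @Clim X F f L -> Clim F f L'.
Proof. intros ->; auto. Qed.

Section LB.
Variable eta : C.
Hypothesis Heta : 0 < Im eta.

Notation rr := (rr eta).
Notation pw := (pw eta).
Notation qp := (qp eta).
Notation ip := (ip eta).

Lemma pw_lim0 c : Clim ev (fun N => pw (Z.of_nat N + c)) (RtoC 0).
Proof.
  intros e He.
  set (K := exp (- (2 * PI * Im eta) * IZR c)).
  assert (HK : 0 < K) by apply exp_pos.
  destruct (pow_lt_1_zero rr ltac:(rewrite Rabs_pos_eq; [apply rr_lt1; auto| left; apply rr_pos]) (e / K) ltac:(apply Rdiv_lt_0_compat; auto)) as [N0 HN0].
  exists N0. intros N HN. replace (Cminus (pw (Z.of_nat N + c)) (RtoC 0)) with (pw (Z.of_nat N + c)) by ring.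
  rewrite pw_add, Cmod_mult, Cmod_pw_nat by auto. rewrite Cmod_pw. fold K.
  specialize (HN0 N HN). rewrite Rabs_pos_eq in HN0 by (apply pow_le; left; apply rr_pos).
  apply Rmult_lt_compat_r with (r := K) in HN0; auto.
  replace (e / K * K) with e in HN0 by (field; lra). lra.
Qed.

Lemma qip_plus j : Clim ev (fun N => Cmult (qp N) (ip (Z.of_nat N + Z.of_nat j))) (RtoC 1).
Proof.
  induction j.
  - apply (Clim_ext ev (fun _ => RtoC 1)); [|apply Clim_const; apply ev_filter].
    intro N. replace (Z.of_nat N + Z.of_nat 0)%Z with (Z.of_nat N) by lia. rewrite ip_nat.
    field. apply qp_nz; auto.
  - apply (Clim_ext ev (fun N => Cdiv (Cmult (qp N) (ip (Z.of_nat N + Z.of_nat j))) (Cminus (RtoC 1) (pw (Z.of_nat N + Z.of_nat (S j)))))).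
    + intro N. rewrite (ip_rec eta Heta (Z.of_nat N + Z.of_nat j)%Z).
      replace (Z.of_nat N + Z.of_nat j + 1)%Z with (Z.of_nat N + Z.of_nat (S j))%Z by lia.
      field. apply one_minus_pw_nz; auto. lia.
    + apply (Clim_eqL _ _ (Cdiv (RtoC 1) (Cminus (RtoC 1) (RtoC 0)))); [field; apply C1_nz|].
      apply Clim_div; [apply ev_filter| |auto|].
      * replace (Cminus (RtoC 1) (RtoC 0)) with (RtoC 1) by ring. apply C1_nz.
      * apply Clim_minus; [apply ev_filter| apply Clim_const; apply ev_filter| apply pw_lim0].
Qed.

Lemma qip_minus j : Clim ev (fun N => Cmult (qp N) (ip (Z.of_nat N - Z.of_nat j))) (RtoC 1).
Proof.
  induction j.
  - apply (Clim_ext ev (fun _ => RtoC 1)); [|apply Clim_const; apply ev_filter].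
    intro N. replace (Z.of_nat N - Z.of_nat 0)%Z with (Z.of_nat N) by lia. rewrite ip_nat.
    field. apply qp_nz; auto.
  - apply (Clim_ext ev (fun N => Cmult (Cminus (RtoC 1) (pw (Z.of_nat N + - Z.of_nat j))) (Cmult (qp N) (ip (Z.of_nat N - Z.of_nat j))))).
    + intro N. rewrite (ip_rec eta Heta (Z.of_nat N - Z.of_nat (S j))%Z).
      replace (Z.of_nat N - Z.of_nat (S j) + 1)%Z with (Z.of_nat N - Z.of_nat j)%Z by lia.
      replace (Z.of_nat N + - Z.of_nat j)%Z with (Z.of_nat N - Z.of_nat j)%Z by lia. ring.
    + apply (Clim_eqL _ _ (Cmult (Cminus (RtoC 1) (RtoC 0)) (RtoC 1))); [ring|].
      apply Clim_mult; [apply ev_filter| |auto].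
      apply Clim_minus; [apply ev_filter| apply Clim_const; apply ev_filter| apply pw_lim0].
Qed.

Definition beta (N : nat) (m : Z) : C :=
  Cmult (Cmult (Cmult (qp N) (qp N)) (ip (Z.of_nat N + m))) (ip (Z.of_nat N - m)).

Lemma beta_lim_pos p : Clim ev (fun N => beta N (Z.of_nat p)) (RtoC 1).
Proof.
  apply (Clim_ext ev (fun N => Cmult (Cmult (qp N) (ip (Z.of_nat N + Z.of_nat p))) (Cmult (qp N) (ip (Z.of_nat N - Z.of_nat p))))).
  - intro N. unfold beta. ring.
  - apply (Clim_eqL _ _ (Cmult (RtoC 1) (RtoC 1))); [ring|].
    apply Clim_mult; [apply ev_filter| apply qip_plus| apply qip_minus].
Qed.

Lemma beta_lim_neg p : Clim ev (fun N => beta N (- Z.of_nat (S p))) (RtoC 1).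
Proof.
  apply (Clim_ext ev (fun N => Cmult (Cmult (qp N) (ip (Z.of_nat N - Z.of_nat (S p)))) (Cmult (qp N) (ip (Z.of_nat N + Z.of_nat (S p)))))).
  - intro N. unfold beta. replace (Z.of_nat N + - Z.of_nat (S p))%Z with (Z.of_nat N - Z.of_nat (S p))%Z by lia.
    replace (Z.of_nat N - - Z.of_nat (S p))%Z with (Z.of_nat N + Z.of_nat (S p))%Z by lia. ring.
  - apply (Clim_eqL _ _ (Cmult (RtoC 1) (RtoC 1))); [ring|].
    apply Clim_mult; [apply ev_filter| apply qip_minus| apply qip_plus].
Qed.

Definition Bb := Bq eta * Bq eta * / dq eta * / dq eta.

Lemma beta_bound N m : Cmod (beta N m) <= Bb.
Proof.
  unfold beta, Bb. rewrite !Cmod_mult.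
  pose proof (qp_ub eta Heta N). pose proof (ip_ub eta Heta (Z.of_nat N + m)%Z). pose proof (ip_ub eta Heta (Z.of_nat N - m)%Z).
  pose proof (Cmod_ge_0 (qp N)). pose proof (Cmod_ge_0 (ip (Z.of_nat N + m)%Z)). pose proof (Cmod_ge_0 (ip (Z.of_nat N - m)%Z)).
  apply Rmult_le_compat; [apply Rmult_le_pos; [apply Rmult_le_pos|]; auto| auto| |auto].
  apply Rmult_le_compat; [apply Rmult_le_pos; auto| auto| |auto].
  apply Rmult_le_compat; auto.
Qed.

Definition SigmaN (w : C) (N : nat) : C :=
  Cplus (Cseries (fun p => Cmult (beta N (Z.of_nat p)) (theta_term eta w (Z.of_nat p))))
        (Cseries (fun p => Cmult (beta N (- Z.of_nat (S p))) (theta_term eta w (- Z.of_nat (S p))))).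

Lemma tannery_beta (f : nat -> C) (gg : nat -> R) (mm : nat -> Z) :
  ex_series gg -> (forall p, Cmod (f p) <= gg p) ->
  (forall p, Clim ev (fun N => beta N (mm p)) (RtoC 1)) ->
  Clim ev (fun N => Cseries (fun p => Cmult (beta N (mm p)) (f p))) (Cseries f).
Proof.
  intros Hg Hf Hb.
  pose proof (Cmod_ge_0 (beta 0 0)) as HB0. pose proof (beta_bound 0 0) as HB1.
  apply (tannery_C ev _ _ (fun p => (Bb + 1) * gg p)).
  - apply ex_series_scal_R; auto.
  - intro p. apply (Clim_eqL _ _ (Cmult (RtoC 1) (f p))); [ring|].
    apply Clim_mult; [apply ev_filter| apply Hb| apply Clim_const; apply ev_filter].
  - intro p. pose proof (Hf p). pose proof (Cmod_ge_0 (f p)). nra.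
  - apply filter_forall. intros N p. rewrite Cmod_mult.
    pose proof (beta_bound N (mm p)). pose proof (Hf p). pose proof (Cmod_ge_0 (f p)).
    pose proof (Cmod_ge_0 (beta N (mm p))).
    apply Rle_trans with (Bb * gg p); [apply Rmult_le_compat; auto|]. nra.
Qed.

Lemma Sigma_lim w : Clim ev (SigmaN w) (theta eta w).
Proof.
  pose proof PI_pos'.
  apply Clim_plus; [apply ev_filter| |].
  - apply (tannery_beta (fun p => theta_term eta w (Z.of_nat p)) (gb (2 * PI * Rabs (Im w) + PI * Im eta) (PI * Im eta))
             (fun p => Z.of_nat p)).
    + apply ex_series_gb. nra.
    + intro p. apply tt_bound_pos. apply Rle_refl.
    + apply beta_lim_pos.
  - apply (tannery_beta (fun p => theta_term eta w (- Z.of_nat (S p))) (fun p => exp (2 * PI * Rabs (Im w)) * gb (2 * PI * Rabs (Im w)) (PI * Im eta) p)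
             (fun p => (- Z.of_nat (S p))%Z)).
    + apply ex_series_scal_R, ex_series_gb. nra.
    + intro p. apply tt_bound_neg; auto. apply Rle_refl.
    + apply beta_lim_neg.
Qed.

End LB.

Section LB2.
Variable eta : C.
Hypothesis Heta : 0 < Im eta.

Notation rr := (rr eta).
Notation pw := (pw eta).
Notation qp := (qp eta).
Notation ip := (ip eta).

Lemma Pp_Sigma w N : Cmult (Cmult (qp N) (qp N)) (Pp eta N w) = Cmult (qp (2 * N)) (SigmaN eta w N).
Proof.
  rewrite (JTPfin eta Heta w N N (le_n N)).
  rewrite <- LS_scal.
  rewrite (LS_ext _ _ _ (fun m => Cmult (qp (2 * N)) (Cmult (beta eta N m) (theta_term eta w m)))).
  2:{ intro m. unfold acoef, beta, theta_term, xp, pwh. rewrite ee_add. ring. }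
  rewrite LS_scal, LS_split. unfold SigmaN. f_equal.
  rewrite (Cseries_fin (S N)), (Cseries_fin N); auto.
  - intros p Hp. unfold beta. rewrite (ip_neg eta (Z.of_nat N + - Z.of_nat (S p))%Z) by lia. ring.
  - intros p Hp. unfold beta. rewrite (ip_neg eta (Z.of_nat N - Z.of_nat p)%Z) by lia. ring.
Qed.

Theorem theta_lb l u : rr < l -> l <= u -> u * rr < 1 ->
  exists kappa, 0 < kappa /\ forall w, l <= Cmod (ee w) <= u ->
    kappa * Cmod (Cminus (RtoC 1) (ee w)) <= Cmod (theta eta w).
Proof.
  intros Hl Hlu Hu. pose proof (rr_range eta Heta) as Hr.
  assert (Hl0 : 0 < l) by lra.
  assert (Hil : / l * rr < 1).
  { assert (/ l * rr < / l * l) by (apply Rmult_lt_compat_l; [apply Rinv_0_lt_compat|]; lra).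
    rewrite Rinv_l in H by lra. lra. }
  assert (Hu0 : 0 <= u) by lra.
  set (D1 := dm u rr). set (D2 := dm (/ l) rr). set (dq := dq eta). set (Bq := Bq eta).
  assert (HD1 : 0 < D1) by apply dm_pos. assert (HD2 : 0 < D2) by apply dm_pos.
  assert (Hdq : 0 < dq) by apply dq_pos.
  assert (HBq : 0 < Bq) by apply exp_pos.
  exists (D1 * D2 * dq * dq / Bq). split.
  { apply Rdiv_lt_0_compat; auto. repeat apply Rmult_lt_0_compat; auto. }
  intros w Hw.
  set (a := Cmod (Cminus (RtoC 1) (ee w))).
  assert (Ha : 0 <= a) by apply Cmod_ge_0.
  destruct (Rle_lt_dec (D1 * D2 * dq * dq / Bq * a) (Cmod (theta eta w))) as [|Hlt]; auto.
  exfalso.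
  set (e := D1 * D2 * dq * dq / Bq * a - Cmod (theta eta w)).
  assert (He : 0 < e) by (unfold e; lra).
  destruct (Sigma_lim eta Heta w e He) as [N0 HN0].
  specialize (HN0 (S N0) ltac:(lia)).
  set (Sg := SigmaN eta w (S N0)) in *.
  assert (HS : Cmod Sg < D1 * D2 * dq * dq / Bq * a).
  { assert (Cmod Sg <= Cmod (Cminus Sg (theta eta w)) + Cmod (theta eta w)).
    { replace Sg with (Cplus (Cminus Sg (theta eta w)) (theta eta w)) at 1 by ring. apply Cmod_triangle. }
    unfold e in HN0. lra. }
  pose proof (Pp_Sigma w (S N0)) as E. fold Sg in E.
  apply (f_equal Cmod) in E. rewrite !Cmod_mult in E.
  pose proof (Pp_lb eta Heta w l u N0 Hl Hu Hw) as P1.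
  pose proof (rprodm_lb' u rr N0 Hu0 Hr Hu) as R1. fold D1 in R1.
  pose proof (rprodm_lb' (/ l) rr (S N0) ltac:(left; apply Rinv_0_lt_compat; lra) Hr Hil) as R2. fold D2 in R2.
  pose proof (qp_lb eta Heta (S N0)) as Q1. fold dq in Q1.
  pose proof (qp_ub eta Heta (2 * S N0)%nat) as Q2. fold Bq in Q2.
  fold a in P1.
  assert (A1 : a * D1 * D2 <= Cmod (Pp eta (S N0) w)).
  { eapply Rle_trans; [|apply P1]. apply Rmult_le_compat; try (apply Rmult_le_pos); try lra.
    apply Rmult_le_compat_l; lra. }
  assert (A2 : dq * dq * (a * D1 * D2) <= Cmod (qp (S N0)) * Cmod (qp (S N0)) * Cmod (Pp eta (S N0) w)).
  { assert (0 <= a * D1 * D2) by (apply Rmult_le_pos; [apply Rmult_le_pos|]; lra).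
    apply Rmult_le_compat; [apply Rmult_le_pos; lra| exact H| apply Rmult_le_compat; lra| exact A1]. }
  rewrite E in A2.
  assert (A3 : Cmod (qp (2 * S N0)) * Cmod Sg <= Bq * Cmod Sg) by (apply Rmult_le_compat_r; [apply Cmod_ge_0| auto]).
  assert (A4 : Bq * Cmod Sg < Bq * (D1 * D2 * dq * dq / Bq * a)) by (apply Rmult_lt_compat_l; auto).
  replace (Bq * (D1 * D2 * dq * dq / Bq * a)) with (dq * dq * (a * D1 * D2)) in A4 by (field; lra).
  lra.
Qed.

End LB2.

Lemma ee_eq1_Im w : ee w = RtoC 1 -> Im w = 0.
Proof.
  intros H. pose proof (Cmod_ee w). rewrite H, Cmod_1 in H0.
  destruct (Rtotal_order (Im w) 0) as [Hl|[He|Hg]]; auto; exfalso.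
  - assert (exp 0 < exp (- (2 * PI * Im w))) by (apply exp_increasing; pose proof PI_pos'; nra). rewrite exp_0 in H1. lra.
  - assert (exp (- (2 * PI * Im w)) < exp 0) by (apply exp_increasing; pose proof PI_pos'; nra). rewrite exp_0 in H1. lra.
Qed.

Lemma ee_sin w : Im w = 0 -> Im (ee w) = sin (2 * PI * Re w).
Proof. intros H. unfold ee. simpl. rewrite H. replace (- (2 * PI * 0)) with 0 by ring. rewrite exp_0. ring. Qed.

Lemma ee_cos w : Im w = 0 -> Re (ee w) = cos (2 * PI * Re w).
Proof. intros H. unfold ee. simpl. rewrite H. replace (- (2 * PI * 0)) with 0 by ring. rewrite exp_0. ring. Qed.

Lemma ee_ne1_unit w : Im w = 0 -> 0 < Re w < 1 -> ee w <> RtoC 1.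
Proof.
  intros HI HR E. pose proof (ee_sin w HI) as S. pose proof (ee_cos w HI) as Co. rewrite E in S, Co. simpl in S, Co.
  pose proof PI_pos'.
  destruct (sin_eq_O_2PI_0 (2 * PI * Re w)) as [A|[A|A]]; try nra; auto.
  rewrite A, cos_PI in Co. lra.
Qed.

Lemma ee_ne1_small w : Cmod w < 1/4 -> w <> RtoC 0 -> ee w <> RtoC 1.
Proof.
  intros Hw Hn E. pose proof (ee_eq1_Im w E) as HI.
  pose proof (ee_sin w HI) as S. rewrite E in S. simpl in S.
  pose proof (Re_le_Cmod w). pose proof PI_pos'.
  destruct (Rtotal_order (Re w) 0) as [Hl|[He|Hg]].
  - assert (0 < sin (- (2 * PI * Re w))).
    { apply sin_gt_0. nra. unfold Rabs in H; destruct (Rcase_abs (Re w)); nra. }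
    rewrite sin_neg in H1. lra.
  - apply Hn. destruct w; simpl in *; subst. reflexivity.
  - assert (0 < sin (2 * PI * Re w)).
    { apply sin_gt_0. nra. unfold Rabs in H; destruct (Rcase_abs (Re w)); nra. }
    lra.
Qed.

Lemma ee_lt1_ne1 w : 0 < Im w -> ee w <> RtoC 1.
Proof. intros H E. apply ee_eq1_Im in E. lra. Qed.

Section NZ.
Variable eta : C.
Hypothesis Heta : 0 < Im eta.

Lemma theta_ne0 w : rr eta < Cmod (ee w) <= 1 -> ee w <> RtoC 1 -> theta eta w <> RtoC 0.
Proof.
  intros Hx Hne E.
  destruct (theta_lb eta Heta (Cmod (ee w)) (Cmod (ee w))) as [k [Hk H]]; try lra.
  - pose proof (rr_lt1 eta Heta). pose proof (rr_pos eta). nra.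
  - specialize (H w ltac:(lra)). rewrite E, Cmod_0 in H.
    assert (0 < Cmod (Cminus (RtoC 1) (ee w))).
    { apply Cmod_gt_0. intro E2. apply Hne. apply Ceq_minus in E2. auto. }
    nra.
Qed.

Lemma hfun_0_ne0 : hfun eta (RtoC 0) <> RtoC 0.
Proof.
  destruct (theta_lb eta Heta 1 1) as [k [Hk H]]; try lra.
  - apply rr_lt1; auto.
  - rewrite Rmult_1_l. apply rr_lt1; auto.
  - intro E.
    destruct (hfun_cont eta (RtoC 0) Heta k Hk) as [d [Hd Hc]].
    set (t := Rmin (d / 2) (1 / 8)).
    assert (Ht : 0 < t) by (apply Rmin_pos; lra).
    assert (Ht1 : t <= d / 2) by apply Rmin_l. assert (Ht2 : t <= 1/8) by apply Rmin_r.
    assert (Cm : Cmod (RtoC t) = t) by (rewrite Cmod_R, Rabs_pos_eq; lra).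
    specialize (Hc (RtoC t)). rewrite E in Hc.
    replace (Cminus (RtoC t) (RtoC 0)) with (RtoC t) in Hc by ring.
    replace (Cminus (hfun eta (RtoC t)) (RtoC 0)) with (hfun eta (RtoC t)) in Hc by ring.
    specialize (Hc ltac:(lra)).
    assert (Hee : ee (RtoC t) <> RtoC 1) by (apply ee_ne1_unit; simpl; lra).
    assert (Hm : Cmod (ee (RtoC t)) = 1) by (rewrite Cmod_ee; simpl; replace (- (2 * PI * 0)) with 0 by ring; apply exp_0).
    specialize (H (RtoC t) ltac:(lra)).
    rewrite theta_factor in H by auto. rewrite Cmod_mult in H.
    replace (Cminus (ee (RtoC t)) (RtoC 1)) with (Copp (Cminus (RtoC 1) (ee (RtoC t)))) in H by ring.
    rewrite Cmod_opp in H.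
    assert (0 < Cmod (Cminus (RtoC 1) (ee (RtoC t)))).
    { apply Cmod_gt_0. intro E2. apply Hee. apply Ceq_minus in E2. auto. }
    nra.
Qed.

End NZ.

Lemma mod_eq_ex n x y : (0 < n)%Z -> ((x mod n = y mod n)%Z <-> exists t, (x - y = n * t)%Z).
Proof.
  intros Hn. split.
  - intros H. apply Zmod_divides; [lia|]. rewrite Zminus_mod, H, Z.sub_diag. apply Z.mod_0_l. lia.
  - intros [t Ht]. replace x with (y + t * n)%Z by lia. apply Z.mod_add. lia.
Qed.

Lemma eqmod_true n x y : (0 < n)%Z -> eqmod n x y = true <-> exists t, (x - y = n * t)%Z.
Proof. intros Hn. unfold eqmod. rewrite Z.eqb_eq. apply mod_eq_ex; auto. Qed.

Lemma eqmod_small n x y : (0 <= x < n)%Z -> (0 <= y < n)%Z -> eqmod n x y = Z.eqb x y.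
Proof. intros Hx Hy. unfold eqmod. rewrite !Z.mod_small; auto. Qed.

Lemma Cprod_nz l f : (forall x, In x l -> f x <> RtoC 0) -> Cprod l f <> RtoC 0.
Proof.
  induction l; simpl; intros H.
  - apply C1_nz.
  - apply Cmult_neq_0; auto.
Qed.

Lemma Cprod_ext_in l f g : (forall x, In x l -> f x = g x) -> Cprod l f = Cprod l g.
Proof. induction l; simpl; intros H; auto. rewrite H, IHl; auto. Qed.

Lemma Cprod_split l f (P : Z -> bool) :
  Cprod l f = Cmult (Cprod (filter P l) f) (Cprod (filter (fun x => negb (P x)) l) f).
Proof.
  induction l; simpl. - ring.
  - destruct (P a); simpl; rewrite IHl; ring.
Qed.

Lemma filter_all {A} (f : A -> bool) l : (forall x, In x l -> f x = true) -> filter f l = l.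
Proof. induction l; simpl; intros H; auto. rewrite H by auto. rewrite IHl; auto. Qed.

Lemma filter_none {A} (f : A -> bool) l : (forall x, In x l -> f x = false) -> filter f l = nil.
Proof. induction l; simpl; intros H; auto. rewrite H by auto. rewrite IHl; auto. Qed.

Lemma Clim_Cprod {X} F {FF : Filter F} (l : list Z) (f : X -> Z -> C) (L : Z -> C) :
  (forall b, In b l -> Clim F (fun y => f y b) (L b)) -> Clim F (fun y => Cprod l (f y)) (Cprod l L).
Proof.
  induction l; simpl; intros H.
  - apply Clim_const; auto.
  - apply Clim_mult; auto.
Qed.

Definition L1 (n : Z) : list Z := map Z.of_nat (seq 1 (Z.to_nat n - 1)).

Lemma Zrange_cons n : (1 <= n)%Z -> Zrange n = 0%Z :: L1 n.
Proof.
  intros Hn. unfold Zrange, L1. replace (Z.to_nat n) with (S (Z.to_nat n - 1)) at 1 by lia. reflexivity.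
Qed.

Lemma L1_eq n : (1 <= n)%Z -> map Z.succ (Zrange (n - 1)) = L1 n.
Proof.
  intros Hn. unfold Zrange, L1. rewrite map_map.
  replace (Z.to_nat (n - 1)) with (Z.to_nat n - 1)%nat by lia.
  rewrite <- seq_shift, map_map. apply map_ext. intro; lia.
Qed.

Lemma In_Zrange n x : In x (Zrange n) -> (0 <= x < n)%Z.
Proof. unfold Zrange. intros H. apply in_map_iff in H. destruct H as [y [<- Hy]]. apply in_seq in Hy. lia. Qed.

Lemma In_L1 n x : In x (L1 n) -> (1 <= x < n)%Z.
Proof. unfold L1. intros H. apply in_map_iff in H. destruct H as [y [<- Hy]]. apply in_seq in Hy. lia. Qed.

Lemma filter_seq_single n s lo len : (0 < n)%Z -> (Z.of_nat lo + Z.of_nat len <= n)%Z ->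
  filter (fun b => eqmod n b s) (map Z.of_nat (seq lo len)) =
  if andb (Z.of_nat lo <=? s mod n)%Z (s mod n <? Z.of_nat lo + Z.of_nat len)%Z then (s mod n)%Z :: nil else nil.
Proof.
  intros Hn. revert lo. induction len; intros lo Hl.
  - simpl. destruct ((Z.of_nat lo <=? s mod n)%Z) eqn:E1, ((s mod n <? Z.of_nat lo + 0)%Z) eqn:E2; simpl; auto.
    apply Z.leb_le in E1. apply Z.ltb_lt in E2. lia.
  - simpl. rewrite IHlen by lia.
    assert (Hm : eqmod n (Z.of_nat lo) s = Z.eqb (Z.of_nat lo) (s mod n)).
    { unfold eqmod. rewrite Z.mod_small by lia. auto. }
    rewrite Hm. pose proof (Z.mod_pos_bound s n Hn).
    destruct (Z.eqb_spec (Z.of_nat lo) (s mod n)) as [E|E];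
    repeat match goal with |- context [(?a <=? ?b)%Z] => let h := fresh in destruct (a <=? b)%Z eqn:h end;
    repeat match goal with |- context [(?a <? ?b)%Z] => let h := fresh in destruct (a <? b)%Z eqn:h end;
    repeat match goal with H : (_ <=? _)%Z = _ |- _ => first [apply Z.leb_le in H | apply Z.leb_gt in H] end;
    repeat match goal with H : (_ <? _)%Z = _ |- _ => first [apply Z.ltb_lt in H | apply Z.ltb_ge in H] end;
    simpl; try lia; try (rewrite E; reflexivity).
 all: reflexivity.
Qed.

Lemma filter_L1_single n s : (1 <= n)%Z -> (s mod n <> 0)%Z ->
  filter (fun b => eqmod n b s) (L1 n) = (s mod n)%Z :: nil.
Proof.
  intros Hn Hs. unfold L1. rewrite filter_seq_single by lia.
  pose proof (Z.mod_pos_bound s n ltac:(lia)).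
  repeat match goal with |- context [(?a <=? ?b)%Z] => let h := fresh in destruct (a <=? b)%Z eqn:h end;
  repeat match goal with |- context [(?a <? ?b)%Z] => let h := fresh in destruct (a <? b)%Z eqn:h end;
  repeat match goal with H : (_ <=? _)%Z = _ |- _ => first [apply Z.leb_le in H | apply Z.leb_gt in H] end;
  repeat match goal with H : (_ <? _)%Z = _ |- _ => first [apply Z.ltb_lt in H | apply Z.ltb_ge in H] end;
  simpl; auto; lia.
Qed.

Definition Fp (P : C -> Prop) := exists d, 0 < d /\ forall t, Cmod t < d -> t <> RtoC 0 -> P t.

Global Instance Fp_filter : Filter Fp.
Proof.
  constructor.
  - exists 1; split; [lra| auto].
  - intros P Q [d1 [H1 P1]] [d2 [H2 P2]]. exists (Rmin d1 d2); split.
    + apply Rmin_pos; auto.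
    + intros z Hz Hn; split; [apply P1|apply P2]; auto; eapply Rlt_le_trans; eauto; [apply Rmin_l|apply Rmin_r].
  - intros P Q HPQ [d [Hd HP]]. exists d; split; auto.
Qed.

Lemma Fp_lin (a : R) : Clim Fp (fun t => Cmult (RtoC a) t) (RtoC 0).
Proof.
  intros e He. exists (e / (Rabs a + 1)). split.
  - apply Rdiv_lt_0_compat; auto. pose proof (Rabs_pos a); lra.
  - intros t Ht _. replace (Cminus (Cmult (RtoC a) t) (RtoC 0)) with (Cmult (RtoC a) t) by ring.
    rewrite Cmod_mult, Cmod_R. pose proof (Rabs_pos a). pose proof (Cmod_ge_0 t).
    apply Rle_lt_trans with ((Rabs a + 1) * Cmod t); [nra|].
    apply Rmult_lt_compat_l with (r := Rabs a + 1) in Ht; [|lra].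
    replace ((Rabs a + 1) * (e / (Rabs a + 1))) with e in Ht by (field; lra). lra.
Qed.

Lemma Fp_comp (f : C -> C) (g : C -> C) : contC f (RtoC 0) -> Clim Fp g (RtoC 0) -> Clim Fp (fun t => f (g t)) (f (RtoC 0)).
Proof. intros Hf Hg. apply (Clim_comp Fp g f (RtoC 0)); auto. Qed.

Lemma Gs_at0 k : Gs k (RtoC 0) = RtoC (INR k).
Proof.
  induction k; simpl Gs. - simpl. auto.
  - rewrite IHk. replace (Cmult (RtoC (INR k)) (RtoC 0)) with (RtoC 0) by ceq. rewrite ee_0.
    rewrite S_INR. ceq.
Qed.

Section TT.
Variable n : Z.
Hypothesis Hn : (1 <= n)%Z.
Variable eta : C.
Hypothesis Heta : 0 < Im eta.

Lemma theta_alpha_cont al z0 : contC (theta_alpha n eta al) z0.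
Proof.
  unfold theta_alpha. apply contC_mult.
  - apply (contC_comp ee (fun z => Cplus (Cplus (Cmult (RtoC (IZR al)) z) (RtoC (IZR al / (2 * IZR n))))
                          (Cmult (RtoC (IZR (al * (al - n)) / (2 * IZR n))) eta))).
    + apply contC_plus; [apply contC_plus; [apply contC_lin| apply contC_const]| apply contC_const].
    + apply ee_cont.
  - unfold contC. apply (Clim_Cprod (nbC z0) (Zrange n)
      (fun z m => theta eta (Cplus (Cplus z (RtoC (IZR m / IZR n))) (Cmult (RtoC (IZR al / IZR n)) eta)))).
    intros b _. apply (contC_comp (theta eta) (fun z => Cplus (Cplus z (RtoC (IZR b / IZR n))) (Cmult (RtoC (IZR al / IZR n)) eta))).
    + apply contC_plus; [apply contC_plus; [apply contC_id| apply contC_const]| apply contC_const].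
    + apply theta_cont; auto.
Qed.

Lemma T_cont b z0 : contC (thetaZn n eta b) z0.
Proof. unfold thetaZn. apply theta_alpha_cont. Qed.

Lemma T_mod b b' : (b mod n = b' mod n)%Z -> thetaZn n eta b = thetaZn n eta b'.
Proof. intros H. unfold thetaZn. rewrite H. auto. Qed.

Lemma IZR_n_pos : 0 < IZR n.
Proof. apply IZR_lt. lia. Qed.

Lemma T_nz0 b : (b mod n <> 0)%Z -> thetaZn n eta b (RtoC 0) <> RtoC 0.
Proof.
  intros Hb. unfold thetaZn, theta_alpha. set (al := (b mod n)%Z).
  assert (Hal : (1 <= al < n)%Z) by (pose proof (Z.mod_pos_bound b n ltac:(lia)); unfold al; lia).
  apply Cmult_neq_0; [apply ee_nz|]. apply Cprod_nz. intros m Hm.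
  set (w := Cplus (Cplus (RtoC 0) (RtoC (IZR m / IZR n))) (Cmult (RtoC (IZR al / IZR n)) eta)).
  assert (HI : Im w = IZR al / IZR n * Im eta) by (unfold w, Im; simpl; ring).
  pose proof IZR_n_pos.
  assert (Hq : 0 < IZR al / IZR n < 1).
  { assert (1 <= IZR al) by (apply IZR_le; lia). assert (IZR al < IZR n) by (apply IZR_lt; lia).
    split; [apply Rdiv_lt_0_compat; lra|]. apply Rmult_lt_reg_r with (IZR n); [lra|]. field_simplify; lra. }
  apply theta_ne0; auto.
  - rewrite Cmod_ee, HI. unfold rr. pose proof PI_pos'. split.
    + apply exp_increasing. assert (0 < PI * Im eta) by nra. nra.
    + rewrite <- exp_0. apply exp_le. assert (0 < PI * Im eta) by nra. nra.
  - apply ee_lt1_ne1. rewrite HI. apply Rmult_lt_0_compat; lra.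
Qed.

Definition Ufun (w : C) : C :=
  Cprod (L1 n) (fun m => theta eta (Cplus (Cplus w (RtoC (IZR m / IZR n))) (Cmult (RtoC (IZR 0 / IZR n)) eta))).

Lemma T0_eq w : thetaZn n eta 0 w = Cmult (theta eta w) (Ufun w).
Proof.
  unfold thetaZn. rewrite Z.mod_0_l by lia. unfold theta_alpha.
  rewrite Zrange_cons by auto. simpl Cprod. rewrite Z.mul_0_l.
  replace (Cplus (Cplus (Cmult (RtoC (IZR 0)) w) (RtoC (IZR 0 / (2 * IZR n)))) (Cmult (RtoC (IZR 0 / (2 * IZR n))) eta))
    with (RtoC 0) by ceq.
  rewrite ee_0.
  replace (Cplus (Cplus w (RtoC (IZR 0 / IZR n))) (Cmult (RtoC (IZR 0 / IZR n)) eta)) with w by ceq.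
  unfold Ufun. ring.
Qed.

Lemma Ufun_cont z0 : contC Ufun z0.
Proof.
  unfold contC, Ufun. apply (Clim_Cprod (nbC z0) (L1 n)
      (fun z m => theta eta (Cplus (Cplus z (RtoC (IZR m / IZR n))) (Cmult (RtoC (IZR 0 / IZR n)) eta)))).
  intros b _. apply (contC_comp (theta eta) (fun z => Cplus (Cplus z (RtoC (IZR b / IZR n))) (Cmult (RtoC (IZR 0 / IZR n)) eta))).
  + apply contC_plus; [apply contC_plus; [apply contC_id| apply contC_const]| apply contC_const].
  + apply theta_cont; auto.
Qed.

Lemma Ufun_nz0 : Ufun (RtoC 0) <> RtoC 0.
Proof.
  unfold Ufun. apply Cprod_nz. intros m Hm. apply In_L1 in Hm.
  set (w := Cplus (Cplus (RtoC 0) (RtoC (IZR m / IZR n))) (Cmult (RtoC (IZR 0 / IZR n)) eta)).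
  pose proof IZR_n_pos.
  assert (HI : Im w = 0) by (unfold w, Im; simpl; unfold Rdiv; ring).
  assert (HR : Re w = IZR m / IZR n) by (unfold w, Re; simpl; unfold Rdiv; ring).
  apply theta_ne0; auto.
  - rewrite Cmod_ee, HI. replace (- (2 * PI * 0)) with 0 by ring. rewrite exp_0.
    pose proof (rr_lt1 eta Heta). lra.
  - apply ee_ne1_unit; auto. rewrite HR.
    assert (1 <= IZR m) by (apply IZR_le; lia). assert (IZR m < IZR n) by (apply IZR_lt; lia).
    split; [apply Rdiv_lt_0_compat; lra|]. apply Rmult_lt_reg_r with (IZR n); [lra|]. field_simplify; lra.
Qed.

Definition Vfun (w : C) : C := Cmult (hfun eta w) (Ufun w).

Lemma T0_V w : thetaZn n eta 0 w = Cmult (Cminus (ee w) (RtoC 1)) (Vfun w).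
Proof. rewrite T0_eq, theta_factor by auto. unfold Vfun. ring. Qed.

Lemma T0_at0 : thetaZn n eta 0 (RtoC 0) = RtoC 0.
Proof. rewrite T0_V, ee_0. ring. Qed.

Lemma Vfun_cont z0 : contC Vfun z0.
Proof. apply contC_mult; [apply hfun_cont; auto| apply Ufun_cont]. Qed.

Lemma Vfun_nz0 : Vfun (RtoC 0) <> RtoC 0.
Proof. apply Cmult_neq_0; [apply hfun_0_ne0; auto| apply Ufun_nz0]. Qed.

Lemma ee_ratio_lim (a : Z) : Clim Fp (fun t => Cdiv (Cminus (ee (Cmult (RtoC (IZR a)) t)) (RtoC 1)) (Cminus (ee t) (RtoC 1))) (RtoC (IZR a)).
Proof.
  assert (Hev : Fp (fun t => ee t <> RtoC 1)).
  { exists (1/4). split; [lra|]. intros t Ht Hn0. apply ee_ne1_small; auto. }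
  destruct (Z_le_gt_dec 0 a) as [Ha|Ha].
  - replace a with (Z.of_nat (Z.to_nat a)) by lia. set (k := Z.to_nat a).
    rewrite <- INR_IZR_INZ.
    apply (Clim_ext_ev Fp (fun t => Gs k t)).
    + generalize Hev. apply filter_imp. intros t Ht.
      rewrite <- Gs_mul. field. intro E. apply Ht. apply Ceq_minus in E. auto.
    + rewrite <- Gs_at0. apply (Fp_comp (Gs k) (fun t => t)); [apply Gs_cont|].
      apply (Clim_ext Fp (fun t => Cmult (RtoC 1) t)); [intro; ring| apply Fp_lin].
  - replace a with (- Z.of_nat (Z.to_nat (- a)))%Z by lia. set (k := Z.to_nat (- a)).
    rewrite opp_IZR, <- INR_IZR_INZ.
    apply (Clim_ext_ev Fp (fun t => Copp (Cmult (ee (Cmult (RtoC (- INR k)) t)) (Gs k t)))).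
    + generalize Hev. apply filter_imp. intros t Ht.
      assert (E1 : Cminus (ee (Cmult (RtoC (- INR k)) t)) (RtoC 1) =
                   Copp (Cmult (ee (Cmult (RtoC (- INR k)) t)) (Cminus (ee (Cmult (RtoC (INR k)) t)) (RtoC 1)))).
      { replace (ee (Cmult (RtoC (- INR k)) t)) with (ee (Copp (Cmult (RtoC (INR k)) t))) by (f_equal; ceq).
        pose proof (ee_opp_mul (Cmult (RtoC (INR k)) t)). 
        transitivity (Cminus (ee (Copp (Cmult (RtoC (INR k)) t))) (Cmult (ee (Copp (Cmult (RtoC (INR k)) t))) (ee (Cmult (RtoC (INR k)) t)))).
        - rewrite H. auto.
        - ring. }
      rewrite E1, <- Gs_mul. field. intro E. apply Ht. apply Ceq_minus in E. auto.
    + apply (Clim_eqL _ _ (Copp (Cmult (ee (Cmult (RtoC (- INR k)) (RtoC 0))) (Gs k (RtoC 0))))).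
      { rewrite Gs_at0. replace (Cmult (RtoC (- INR k)) (RtoC 0)) with (RtoC 0) by ceq. rewrite ee_0. ceq. }
      apply Clim_opp; [apply Fp_filter|]. apply Clim_mult; [apply Fp_filter| |].
      * apply (Fp_comp (fun t => ee (Cmult (RtoC (- INR k)) t)) (fun t => t)).
        -- apply (contC_comp ee (fun t => Cmult (RtoC (- INR k)) t)); [apply contC_lin| apply ee_cont].
        -- apply (Clim_ext Fp (fun t => Cmult (RtoC 1) t)); [intro; ring| apply Fp_lin].
      * apply (Fp_comp (Gs k) (fun t => t)); [apply Gs_cont|].
        apply (Clim_ext Fp (fun t => Cmult (RtoC 1) t)); [intro; ring| apply Fp_lin].
Qed.

Lemma T0_ratio (a : Z) : Clim Fp (fun t => Cdiv (thetaZn n eta 0 (Cmult (RtoC (IZR a)) t)) (thetaZn n eta 0 t)) (RtoC (IZR a)).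
Proof.
  assert (Hv : Fp (fun t => Vfun t <> RtoC 0)).
  { pose proof Vfun_nz0. assert (0 < Cmod (Vfun (RtoC 0))) by (apply Cmod_gt_0; auto).
    destruct (Vfun_cont (RtoC 0) _ H0) as [d [Hd Hc]].
    exists d. split; auto. intros t Ht _ E. specialize (Hc t).
    replace (Cminus t (RtoC 0)) with t in Hc by ring. specialize (Hc Ht). rewrite E in Hc.
    replace (Cminus (RtoC 0) (Vfun (RtoC 0))) with (Copp (Vfun (RtoC 0))) in Hc by ring. rewrite Cmod_opp in Hc. lra. }
  assert (Hev : Fp (fun t => ee t <> RtoC 1)).
  { exists (1/4). split; [lra|]. intros t Ht Hn0. apply ee_ne1_small; auto. }
  apply (Clim_ext_ev Fp (fun t => Cmult (Cdiv (Cminus (ee (Cmult (RtoC (IZR a)) t)) (RtoC 1)) (Cminus (ee t) (RtoC 1)))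
                                        (Cdiv (Vfun (Cmult (RtoC (IZR a)) t)) (Vfun t)))).
  - generalize (filter_and _ _ Hv Hev). apply filter_imp. intros t [H1 H2].
    rewrite !T0_V. field. split; auto. intro E. apply H2. apply Ceq_minus in E. auto.
  - apply (Clim_eqL _ _ (Cmult (RtoC (IZR a)) (Cdiv (Vfun (RtoC 0)) (Vfun (RtoC 0))))).
    { field. apply Vfun_nz0. }
    apply Clim_mult; [apply Fp_filter| apply ee_ratio_lim|].
    apply Clim_div; [apply Fp_filter| apply Vfun_nz0| |].
    + apply (Fp_comp Vfun); [apply Vfun_cont| apply Fp_lin].
    + apply (Fp_comp Vfun (fun t => t)); [apply Vfun_cont|].
      apply (Clim_ext Fp (fun t => Cmult (RtoC 1) t)); [intro; ring| apply Fp_lin].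
Qed.

End TT.

Lemma Csum_zero l G : (forall r, In r l -> G r = RtoC 0) -> Csum l G = RtoC 0.
Proof. induction l; simpl; intros H; auto. rewrite H, IHl; auto. ring. Qed.

Lemma Csum_seq_single lo len G c :
  (Z.of_nat lo <= c < Z.of_nat lo + Z.of_nat len)%Z ->
  (forall r, (Z.of_nat lo <= r < Z.of_nat lo + Z.of_nat len)%Z -> r <> c -> G r = RtoC 0) ->
  Csum (map Z.of_nat (seq lo len)) G = G c.
Proof.
  revert lo. induction len; intros lo Hc H; [lia|]. simpl.
  destruct (Z.eq_dec (Z.of_nat lo) c) as [E|E].
  - rewrite Csum_zero. rewrite E. ring.
    intros r Hr. apply in_map_iff in Hr. destruct Hr as [x [<- Hx]]. apply in_seq in Hx.
    apply H; lia.
  - rewrite H by lia. rewrite IHlen. ring. lia. intros r Hr Hne. apply H; lia.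
Qed.

Lemma final_conv (Q : C -> Prop) f L : (forall t, Q t -> t <> RtoC 0) -> Clim Fp f L ->
  filterlim f (within Q (locally (RtoC 0))) (locally L).
Proof.
  intros HQ Hl P [eps HP].
  destruct (Hl (eps / 2) ltac:(destruct eps; simpl; lra)) as [d [Hd Hfd]].
  unfold filtermap, within, locally.
  exists (mkposreal (d / 2) ltac:(lra)). intros y Hy HQy. apply HP.
  destruct Hy as [Hy1 Hy2].
  change (Rabs (fst y - fst (RtoC 0)) < d / 2) in Hy1.
  change (Rabs (snd y - snd (RtoC 0)) < d / 2) in Hy2. simpl in Hy1, Hy2.
  rewrite Rminus_0_r in Hy1, Hy2.
  assert (Hm : Cmod y < d).
  { eapply Rle_lt_trans; [apply Cmod_le_sum|]. unfold Re, Im. lra. }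
  specialize (Hfd y Hm (HQ y HQy)).
  pose proof (Re_le_Cmod (Cminus (f y) L)). pose proof (Im_le_Cmod (Cminus (f y) L)).
  split.
  - change (Rabs (fst (f y) - fst L) < eps).
    replace (fst (f y) - fst L) with (Re (Cminus (f y) L)) by (unfold Re; simpl; ring).
    destruct eps as [eps Heps]; simpl in *. lra.
  - change (Rabs (snd (f y) - snd L) < eps).
    replace (snd (f y) - snd L) with (Im (Cminus (f y) L)) by (unfold Im; simpl; ring).
    destruct eps as [eps Heps]; simpl in *. lra.
Qed.

Lemma small_eq n x y t : (0 <= x < n)%Z -> (0 <= y < n)%Z -> (x - y = n * t)%Z -> x = y.
Proof. intros. destruct (Z.eq_dec t 0). - subst. lia. - destruct (Z_lt_le_dec t 0). + assert (n * t <= - n)%Z by nia. lia. + assert (n <= n * t)%Z by nia. lia. Qed.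

Lemma gauss_nz n k r : (0 < n)%Z -> Z.gcd n k = 1%Z -> (0 < r < n)%Z -> ((k * r) mod n <> 0)%Z.
Proof.
  intros Hn Hg Hr E. apply Z.mod_divide in E; [|lia].
  apply Z.gauss in E; auto. destruct E as [c Hc]. destruct (Z_lt_le_dec c 1). + assert (c * n <= 0)%Z by nia. lia. + assert (n <= c * n)%Z by nia. lia.
Qed.

Section Main.
Variables n k : Z.
Variable eta : C.
Hypothesis Hk : (1 <= k < n)%Z.
Hypothesis Hg : Z.gcd n k = 1%Z.
Hypothesis Heta : 0 < Im eta.

Let Hn : (1 <= n)%Z. Proof. lia. Qed.
Let Hn0 : (0 < n)%Z. Proof. lia. Qed.

Notation T := (thetaZn n eta).

Definition Dd := Cprod (map Z.succ (Zrange (n - 1))) (fun b => T b (RtoC 0)).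

Lemma Dd_eq : Dd = Cprod (L1 n) (fun b => T b (RtoC 0)).
Proof. unfold Dd. rewrite L1_eq; auto. Qed.

Lemma Dd_nz : Dd <> RtoC 0.
Proof.
  rewrite Dd_eq. apply Cprod_nz. intros x Hx. apply In_L1 in Hx.
  apply T_nz0; auto. rewrite Z.mod_small; lia.
Qed.

Lemma Tlim b (c : R) : Clim Fp (fun t => T b (Cmult (RtoC c) t)) (T b (RtoC 0)).
Proof. apply (Fp_comp (T b) (fun t => Cmult (RtoC c) t)); [apply T_cont; auto| apply Fp_lin]. Qed.

Lemma Cprod_lim (l : list Z) (c : R) : Clim Fp (fun t => Cprod l (fun b => T b (Cmult (RtoC c) t))) (Cprod l (fun b => T b (RtoC 0))).
Proof. apply (Clim_Cprod Fp l (fun t b => T b (Cmult (RtoC c) t))). intros; apply Tlim. Qed.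

Lemma filter_s0 s : (s mod n = 0)%Z -> filter (fun b => negb (eqmod n b s)) (Zrange n) = L1 n.
Proof.
  intros Hs. rewrite Zrange_cons by auto. simpl.
  assert (E0 : eqmod n 0 s = true) by (unfold eqmod; rewrite Hs, Z.mod_0_l by lia; apply Z.eqb_refl).
  rewrite E0. simpl. apply filter_all. intros x Hx. apply In_L1 in Hx.
  unfold eqmod. rewrite Hs, Z.mod_small by lia. destruct (Z.eqb_spec x 0); [lia| auto].
Qed.

Lemma filter_sn s : (s mod n <> 0)%Z -> filter (fun b => negb (eqmod n b s)) (Zrange n) =
  0%Z :: filter (fun b => negb (eqmod n b s)) (L1 n).
Proof.
  intros Hs. rewrite Zrange_cons by auto. simpl.
  assert (E0 : eqmod n 0 s = false) by (unfold eqmod; rewrite Z.mod_0_l by lia; apply Z.eqb_neq; auto).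
  rewrite E0. auto.
Qed.

Lemma Dd_split s : (s mod n <> 0)%Z ->
  Dd = Cmult (T s (RtoC 0)) (Cprod (filter (fun b => negb (eqmod n b s)) (L1 n)) (fun b => T b (RtoC 0))).
Proof.
  intros Hs. rewrite Dd_eq. rewrite (Cprod_split (L1 n) _ (fun b => eqmod n b s)).
  rewrite filter_L1_single by auto. simpl.
  rewrite (T_mod n eta s (s mod n)) by (rewrite Z.mod_mod; lia). ring.
Qed.

Variable m : Z.

Definition Rc (i j r : Z) (t : C) : C :=
  Cmult (Cdiv (Cprod (filter (fun b => negb (eqmod n b (j - i - r))) (Zrange n)) (fun b => T b (Cmult (RtoC (- IZR m)) t))) Dd)
        (Cdiv (T (j - i + r * (k - 1)) (Cmult (RtoC (1 - IZR m)) t)) (T (k * r) t)).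

Lemma Rcoeff_Rc i j r t : Rcoeff n k eta t (Cmult (RtoC (IZR m)) t) i j r = Rc i j r t.
Proof.
  unfold Rcoeff, Rc, Dd.
  replace (Copp (Cmult (RtoC (IZR m)) t)) with (Cmult (RtoC (- IZR m)) t) by ceq.
  replace (Cplus (Cmult (RtoC (- IZR m)) t) t) with (Cmult (RtoC (1 - IZR m)) t) by ceq. auto.
Qed.

Lemma lim_A i j r : (0 < r < n)%Z -> ((j - i - r) mod n = 0)%Z -> Clim Fp (Rc i j r) (RtoC 1).
Proof.
  intros Hr Hs. unfold Rc. rewrite filter_s0 by auto.
  assert (Hkr : ((k * r) mod n <> 0)%Z) by (apply gauss_nz; auto; lia).
  assert (ET : T (j - i + r * (k - 1)) = T (k * r)).
  { apply T_mod. apply mod_eq_ex; auto. apply Zmod_divides in Hs; [|lia].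
    destruct Hs as [t Ht]. exists t. replace (j - i + r * (k - 1) - k * r)%Z with (j - i - r)%Z by ring. auto. }
  rewrite ET.
  apply (Clim_eqL _ _ (Cmult (Cdiv (Cprod (L1 n) (fun b => T b (RtoC 0))) Dd) (Cdiv (T (k * r) (RtoC 0)) (T (k * r) (RtoC 0))))).
  { rewrite <- Dd_eq. field. split; [apply T_nz0; auto| apply Dd_nz]. }
  apply Clim_mult; [apply Fp_filter| |].
  - apply Clim_div; [apply Fp_filter| apply Dd_nz| apply Cprod_lim| apply Clim_const; apply Fp_filter].
  - apply Clim_div; [apply Fp_filter| apply T_nz0; auto| apply Tlim|].
    apply (Clim_ext Fp (fun t => T (k * r) (Cmult (RtoC 1) t))); [intro; f_equal; ceq| apply Tlim].
Qed.


Lemma lim_B i : Clim Fp (Rc i i 0) (RtoC (IZR (1 - m))).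
Proof.
  unfold Rc. rewrite filter_s0 by (replace (i - i - 0)%Z with 0%Z by ring; apply Z.mod_0_l; lia).
  replace (i - i + 0 * (k - 1))%Z with 0%Z by ring. replace (k * 0)%Z with 0%Z by ring.
  apply (Clim_eqL _ _ (Cmult (Cdiv (Cprod (L1 n) (fun b => T b (RtoC 0))) Dd) (RtoC (IZR (1 - m))))).
  { rewrite <- Dd_eq. field. apply Dd_nz. }
  apply Clim_mult; [apply Fp_filter| |].
  - apply Clim_div; [apply Fp_filter| apply Dd_nz| apply Cprod_lim| apply Clim_const; apply Fp_filter].
  - rewrite minus_IZR. apply (T0_ratio n Hn eta Heta (1 - m)) || (rewrite <- minus_IZR; apply (T0_ratio n Hn eta Heta (1 - m))).
Qed.

Lemma lim_C i j : (0 <= i < n)%Z -> (0 <= j < n)%Z -> i <> j -> Clim Fp (Rc i j 0) (RtoC (IZR (- m))).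
Proof.
  intros Hi Hj Hij.
  set (s := (j - i - 0)%Z).
  assert (Hs : (s mod n <> 0)%Z).
  { intro E. apply Zmod_divides in E; [|lia]. destruct E as [t Ht]. apply Hij. symmetry. apply (small_eq n j i t); auto. unfold s in Ht. lia. }
  unfold Rc. fold s. rewrite filter_sn by auto.
  replace (j - i + 0 * (k - 1))%Z with s by (unfold s; ring). replace (k * 0)%Z with 0%Z by ring.
  set (F' := filter (fun b => negb (eqmod n b s)) (L1 n)).
  apply (Clim_ext Fp (fun t => Cmult (Cdiv (T 0 (Cmult (RtoC (IZR (- m))) t)) (T 0 t))
        (Cdiv (Cmult (Cprod F' (fun b => T b (Cmult (RtoC (- IZR m)) t))) (T s (Cmult (RtoC (1 - IZR m)) t))) Dd))).
  { intro t. simpl Cprod. rewrite opp_IZR. unfold Cdiv. ring. }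
  apply (Clim_eqL _ _ (Cmult (RtoC (IZR (- m))) (Cdiv (Cmult (Cprod F' (fun b => T b (RtoC 0))) (T s (RtoC 0))) Dd))).
  { assert (HD := Dd_split s Hs). fold F' in HD.
    assert (HX : Cprod F' (fun b => T b (RtoC 0)) <> RtoC 0).
    { intro E. apply Dd_nz. rewrite HD, E. ring. }
    rewrite HD. field. split; auto. apply T_nz0; auto. }
  apply Clim_mult; [apply Fp_filter| apply T0_ratio; auto|].
  apply Clim_div; [apply Fp_filter| apply Dd_nz| |apply Clim_const; apply Fp_filter].
  apply Clim_mult; [apply Fp_filter| apply Cprod_lim| apply Tlim].
Qed.

Lemma lim_D i j r : (0 < r < n)%Z -> ((j - i - r) mod n <> 0)%Z -> Clim Fp (Rc i j r) (RtoC 0).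
Proof.
  intros Hr Hs. unfold Rc. rewrite filter_sn by auto.
  assert (Hkr : ((k * r) mod n <> 0)%Z) by (apply gauss_nz; auto; lia).
  apply (Clim_eqL _ _ (Cmult (Cdiv (Cprod (0%Z :: filter (fun b => negb (eqmod n b (j - i - r))) (L1 n)) (fun b => T b (RtoC 0))) Dd)
                             (Cdiv (T (j - i + r * (k - 1)) (RtoC 0)) (T (k * r) (RtoC 0))))).
  { simpl Cprod. rewrite (T0_at0 n Hn eta Heta). unfold Cdiv. ring. }
  apply Clim_mult; [apply Fp_filter| |].
  - apply Clim_div; [apply Fp_filter| apply Dd_nz| apply Cprod_lim| apply Clim_const; apply Fp_filter].
  - apply Clim_div; [apply Fp_filter| apply T_nz0; auto| apply Tlim|].
    apply (Clim_ext Fp (fun t => T (k * r) (Cmult (RtoC 1) t))); [intro; f_equal; ceq| apply Tlim].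
Qed.

End Main.

Theorem proposition5p2 :
  forall (n k : Z) (eta : C),
    (1 <= k < n)%Z -> Z.gcd n k = 1%Z -> 0 < Im eta ->
    forall m : Z,
    forall i j a b : Z,
      (0 <= i < n)%Z -> (0 <= j < n)%Z -> (0 <= a < n)%Z -> (0 <= b < n)%Z ->
      filterlim (fun tau : C => Rmat n k eta tau (Cmult (RtoC (IZR m)) tau) i j a b)
                (within (fun tau : C => ~ in_lattice_n n eta tau) (locally (RtoC 0)))
                (locally (symmat n m i j a b)).
Proof.
  intros n k eta Hk Hg Heta m i j a b Hi Hj Ha Hb.
  assert (Hn0 : (0 < n)%Z) by lia.
  apply final_conv.
  { intros t Ht E. apply Ht. exists 0%Z, 0%Z. rewrite E. ceq. }
  set (r0 := ((j - a) mod n)%Z).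
  assert (Hr0 : (0 <= r0 < n)%Z) by (apply Z.mod_pos_bound; lia).
  assert (Hq : exists q, (j - a = n * q + r0)%Z) by (exists ((j - a) / n)%Z; apply Z.div_mod; lia).
  destruct Hq as [q Hq].
  assert (Rmat_eq : forall t, Rmat n k eta t (Cmult (RtoC (IZR m)) t) i j a b =
                              Cmult (Rc n k eta m i j r0 t) (Defs.ind (eqmod n b (i + r0)))).
  { intro t. unfold Rmat, Zrange.
    rewrite (Csum_seq_single 0 (Z.to_nat n) _ r0).
    - rewrite Rcoeff_Rc.
      assert (E : eqmod n a (j - r0) = true) by (apply eqmod_true; auto; exists (- q)%Z; lia).
      rewrite E. auto.
    - lia.
    - intros r Hr Hne.
      assert (E : eqmod n a (j - r) = false).
      { destruct (eqmod n a (j - r)) eqn:E; auto. exfalso. apply eqmod_true in E; auto.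
        destruct E as [t0 Ht0]. apply Hne. apply (small_eq n r r0 (q + t0)); lia. }
      rewrite E. simpl. unfold Defs.ind. ring. }
  assert (Esym : forall x y, (0 <= x < n)%Z -> (0 <= y < n)%Z -> eqmod n x y = Z.eqb x y) by (intros; apply eqmod_small; auto).
  unfold symmat. rewrite (Esym a i), (Esym b j), (Esym a j), (Esym b i) by auto.
  destruct (eqmod n b (i + r0)) eqn:Eb.
  2:{
    apply (Clim_ext Fp (fun _ => RtoC 0)).
    { intro t. rewrite Rmat_eq; try rewrite Eb. unfold Defs.ind. ring. }
    apply (Clim_eqL _ _ (RtoC 0)).
    2:{ apply Clim_const; apply Fp_filter. }
    destruct (Z.eqb_spec a i), (Z.eqb_spec b j), (Z.eqb_spec a j), (Z.eqb_spec b i); simpl; unfold Defs.ind; try ring; exfalso.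
    all: assert (eqmod n b (i + r0) = true) by (apply eqmod_true; auto; exists q; lia); congruence. }
  apply eqmod_true in Eb; auto. destruct Eb as [t Ht].
  apply (Clim_ext Fp (Rc n k eta m i j r0)).
  { intro t0. rewrite Rmat_eq. unfold Defs.ind. ring. }
  destruct (Z.eq_dec a i) as [Eai|Eai]; destruct (Z.eq_dec a j) as [Eaj|Eaj].
  -
    subst a. subst j.
    assert (Er : r0 = 0%Z) by (apply (small_eq n r0 0 (- q)); lia).
    assert (b = i) by (apply (small_eq n b i (t - q)); lia). subst b.
    rewrite Er. rewrite !Z.eqb_refl. simpl.
    apply (Clim_eqL _ _ (RtoC (IZR (1 - m)))).
    + rewrite minus_IZR. unfold Defs.ind. ceq.
    + apply lim_B; auto.
  -
    subst a.
    assert (b = j) by (apply (small_eq n b j (t - q)); lia). subst b.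
    assert (Hr : (0 < r0)%Z).
    { destruct (Z.eq_dec r0 0) as [E|E]; [|lia]. exfalso. apply Eaj. symmetry. apply (small_eq n j i q); lia. }
    rewrite Z.eqb_refl. simpl. destruct (Z.eqb_spec i j); [lia|]. simpl.
    apply (Clim_eqL _ _ (RtoC 1)).
    + rewrite ?Z.eqb_refl. unfold Defs.ind. ceq.
    + apply lim_A; auto. lia. apply Zmod_divides; [lia|]. exists q. lia.
  -
    subst a.
    assert (Er : r0 = 0%Z) by (apply (small_eq n r0 0 (- q)); lia).
    assert (b = i) by (apply (small_eq n b i t); lia). subst b.
    rewrite Er. rewrite !Z.eqb_refl. destruct (Z.eqb_spec j i); [lia|]. simpl.
    apply (Clim_eqL _ _ (RtoC (IZR (- m)))).
    + rewrite ?Z.eqb_refl. rewrite opp_IZR. unfold Defs.ind. ceq.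
    + apply lim_C; auto.
  -
    destruct (Z.eqb_spec a i); [lia|]. destruct (Z.eqb_spec a j); [lia|]. simpl.
    assert (Hr : (0 < r0)%Z).
    { destruct (Z.eq_dec r0 0) as [E|E]; [|lia]. exfalso. apply Eaj. symmetry. apply (small_eq n j a q); lia. }
    apply (Clim_eqL _ _ (RtoC 0)).
    + unfold Defs.ind. ceq.
    + apply lim_D; auto. lia.
      intro E. apply Zmod_divides in E; [|lia]. destruct E as [c Hc]. apply Eai.
      apply (small_eq n a i (c - q)); lia.
Qed.
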